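(* (a) If $x=u(\tau)$ and $y=u(2\tau)$, then $x^4(y^4+1)=2y^2$. (b) If $x=v(\tau)$ and $y=v(2\tau)$, then $x^2y+x^2+y^2=y$. These hold for all $\tau$ in the upper half-plane.
   Context: For $\tau$ in the upper half-plane, $q=e^{2\pi i\tau}$ and $q^r:=e^{2\pi i r\tau}$. Define $u(\tau)=\sqrt{2}\,q^{1/8}\prod_{n\ge1}(1+q^n)^{(-1)^n}$ and $v(\tau)=q^{1/2}\prod_{n\ge1}(1-q^n)^{\left(\frac{8}{n}\right)}$, where $\left(\frac{8}{n}\right)$ is the Kronecker symbol ($0$ for $n$ even, $1$ for $n\equiv\pm1\pmod 8$, $-1$ for $n\equiv\pm3\pmod8$). *)

(* Defs.v *)
From Stdlib Require Import Reals.
From Coquelicot Require Import Coquelicot.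
Open Scope R_scope.

Definition cexp (z : C) : C :=
  (exp (Re z) * cos (Im z), exp (Re z) * sin (Im z)).

Definition qpow (r : R) (tau : C) : C :=
  cexp (Cmult (Cmult (RtoC (2 * PI * r)) Ci) tau).

Definition kron8 (n : nat) : Z :=
  match (n mod 8)%nat with
  | 1%nat | 7%nat => 1%Z
  | 3%nat | 5%nat => (-1)%Z
  | _ => 0%Z
  end.

Definition czpow (w : C) (e : Z) : C :=
  match e with
  | Z0 => RtoC 1
  | Zpos p => Cpow w (Pos.to_nat p)
  | Zneg p => Cinv (Cpow w (Pos.to_nat p))
  end.

Fixpoint pprod (f : nat -> C) (N : nat) : C :=
  match N with
  | O => RtoC 1
  | S M => Cmult (pprod f M) (f (S M))
  end.

Definition u_factor (tau : C) (n : nat) : C :=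
  czpow (Cplus (RtoC 1) (qpow (INR n) tau)) (if Nat.even n then 1%Z else (-1)%Z).

Definition v_factor (tau : C) (n : nat) : C :=
  czpow (Cminus (RtoC 1) (qpow (INR n) tau)) (kron8 n).

Definition prod_conv (f : nat -> C) (P : C) : Prop :=
  filterlim (pprod f) eventually (locally P).

(* Main.v *)
Require Import Defs.
From Stdlib Require Import Reals.
From Stdlib Require Import ZArith Lra Lia ClassicalEpsilon FunctionalExtensionality.
From Coquelicot Require Import Coquelicot.
Open Scope R_scope.

Open Scope R_scope.
Local Open Scope C_scope.

Notation E := cexp.
Definition iota : C := (0%R, PI).
Definition nC (n : nat) : C := RtoC (INR n).

Lemma nC_S n : nC (S n) = nC n + 1.
Proof. unfold nC. rewrite S_INR, RtoC_plus. reflexivity. Qed.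
Lemma nC_0 : nC 0 = 0.
Proof. reflexivity. Qed.
Lemma nC_add m n : nC (m + n) = nC m + nC n.
Proof. unfold nC. rewrite plus_INR, RtoC_plus. reflexivity. Qed.
Lemma nC_mul m n : nC (m * n) = nC m * nC n.
Proof. unfold nC. rewrite mult_INR, RtoC_mult. reflexivity. Qed.
Lemma nC_sub m n : (n <= m)%nat -> nC (m - n) = nC m - nC n.
Proof. intros H. unfold nC. rewrite minus_INR by exact H. rewrite RtoC_minus. reflexivity. Qed.

Ltac nCsimpl := repeat (rewrite ?nC_S, ?nC_add, ?nC_mul, ?nC_0).

Lemma re_plus (x y : C) : Re (x + y) = (Re x + Re y)%R.
Proof. reflexivity. Qed.
Lemma re_mult (x y : C) : Re (x * y) = (Re x * Re y - Im x * Im y)%R.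
Proof. reflexivity. Qed.
Lemma re_opp (x : C) : Re (- x) = (- Re x)%R.
Proof. reflexivity. Qed.
Lemma re_minus (x y : C) : Re (x - y) = (Re x - Re y)%R.
Proof. reflexivity. Qed.
Lemma re_RC (r : R) (x : C) : Re (RtoC r * x) = (r * Re x)%R.
Proof. unfold Re, RtoC, Cmult. simpl. ring. Qed.
Lemma re_nC (n : nat) (x : C) : Re (nC n * x) = (INR n * Re x)%R.
Proof. apply re_RC. Qed.
Lemma re_iota : Re iota = 0%R.
Proof. reflexivity. Qed.
Lemma re_R (r : R) : Re (RtoC r) = r.
Proof. reflexivity. Qed.

Lemma cexp_add x y : E (x + y) = E x * E y.
Proof.
  destruct x as [a b], y as [c d]. unfold cexp, Cmult, Cplus, Re, Im; simpl.
  rewrite exp_plus, cos_plus, sin_plus. f_equal; ring.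
Qed.

Lemma cexp_0 : E 0 = 1.
Proof.
  unfold cexp, Re, Im; simpl. rewrite exp_0, cos_0, sin_0.
  apply injective_projections; simpl; ring.
Qed.

Lemma cexp_neq0 x : E x <> 0.
Proof.
  intros H. assert (H1 : E x * E (- x) = 0) by (rewrite H; ring).
  rewrite <- cexp_add in H1.
  replace (x + - x) with (RtoC 0) in H1 by ring.
  rewrite cexp_0 in H1. injection H1. lra.
Qed.

Lemma cexp_opp x : E (- x) = / E x.
Proof.
  assert (H1 : E x * E (- x) = 1).
  { rewrite <- cexp_add. replace (x + - x) with (RtoC 0) by ring. apply cexp_0. }
  pose proof (cexp_neq0 x).
  replace (E (- x)) with (/ E x * (E x * E (- x))) by (field; auto).
  rewrite H1. ring.
Qed.

Lemma Cmod_cexp x : Cmod (E x) = exp (Re x).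
Proof.
  destruct x as [a b]. unfold cexp, Cmod, Re, Im; simpl.
  match goal with |- sqrt ?X = _ => replace X with (exp a ^ 2)%R end.
  - rewrite sqrt_pow2; auto. left; apply exp_pos.
  - pose proof (sin2_cos2 b). unfold Rsqr in H. nra.
Qed.

Lemma cexp_nat n x : E (nC n * x) = E x ^ n.
Proof.
  induction n.
  - simpl. replace (nC 0 * x) with (RtoC 0) by (unfold nC; simpl; ring). apply cexp_0.
  - rewrite nC_S. replace ((nC n + 1) * x) with (nC n * x + x) by ring.
    rewrite cexp_add, IHn. simpl. ring.
Qed.

Lemma cexp_iota : E iota = -1.
Proof.
  unfold cexp, iota, Re, Im; simpl. rewrite exp_0, cos_PI, sin_PI.
  apply injective_projections; simpl; ring.
Qed.

Lemma cexp_2iota : E (2 * iota) = 1.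
Proof.
  replace (2 * iota) with (iota + iota) by ring.
  rewrite cexp_add, cexp_iota. ring.
Qed.

Lemma cexp_per x (k : nat) : E (x + nC k * (2 * iota)) = E x.
Proof. rewrite cexp_add, cexp_nat, cexp_2iota. rewrite Cpow_1_l. ring. Qed.

Lemma cexp_per' x (k : nat) : E (x - nC k * (2 * iota)) = E x.
Proof.
  rewrite <- (cexp_per (x - nC k * (2 * iota)) k). f_equal. ring.
Qed.

Lemma cexp_eqp x y (k : nat) : y = x + nC k * (2 * iota) -> E y = E x.
Proof. intros ->. apply cexp_per. Qed.
Lemma cexp_eqm x y (k : nat) : y = x - nC k * (2 * iota) -> E y = E x.
Proof. intros ->. apply cexp_per'. Qed.

Lemma cexp_plus_iota x : E (x + iota) = - E x.
Proof. rewrite cexp_add, cexp_iota. ring. Qed.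

Close Scope C_scope.
Open Scope R_scope.
Local Open Scope C_scope.

Definition cv (u : nat -> C) (l : C) :=
  forall eps, (0 < eps)%R -> exists N, forall n, (N <= n)%nat -> (Cmod (u n - l) < eps)%R.

Lemma Cmod_sym x y : Cmod (x - y) = Cmod (y - x).
Proof. replace (x - y) with (- (y - x)) by ring. apply Cmod_opp. Qed.

Lemma Cmod_tri x y : (Cmod (x + y) <= Cmod x + Cmod y)%R.
Proof. apply Cmod_triangle. Qed.

Lemma Cmod_tri_minus x y z : (Cmod (x - z) <= Cmod (x - y) + Cmod (y - z))%R.
Proof. replace (x - z) with ((x - y) + (y - z)) by ring. apply Cmod_tri. Qed.

Lemma Cmod_rev x y : (Cmod x - Cmod y <= Cmod (x - y))%R.
Proof. pose proof (Cmod_tri (x - y) y). replace (x - y + y) with x in H by ring. lra. Qed.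

Lemma Cmod_le_1plus x : (Cmod x <= 1 + Cmod (x - 1))%R.
Proof. pose proof (Cmod_tri (x - 1) 1). replace (x - 1 + 1) with x in H by ring.
  rewrite Cmod_1 in H. lra. Qed.


Lemma Cmod_small_0 z : (forall eps, (0 < eps)%R -> (Cmod z < eps)%R) -> z = 0.
Proof.
  intros H. apply Cmod_eq_0. pose proof (Cmod_ge_0 z).
  destruct (Rle_lt_or_eq_dec _ _ H0) as [Hl|Hl]; auto.
  specialize (H _ Hl). lra.
Qed.

Lemma cv_unique u l1 l2 : cv u l1 -> cv u l2 -> l1 = l2.
Proof.
  intros H1 H2.
  assert (l1 - l2 = 0).
  { apply Cmod_small_0. intros eps He.
    destruct (H1 (eps/2)%R) as [N1 HN1]; [lra|].
    destruct (H2 (eps/2)%R) as [N2 HN2]; [lra|].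
    specialize (HN1 (N1 + N2)%nat ltac:(lia)). specialize (HN2 (N1 + N2)%nat ltac:(lia)).
    pose proof (Cmod_tri_minus l1 (u (N1+N2)%nat) l2).
    rewrite (Cmod_sym l1 (u _)) in H. lra. }
  replace l1 with ((l1 - l2) + l2) by ring. rewrite H. ring.
Qed.

Lemma cv_const c : cv (fun _ => c) c.
Proof. intros eps He. exists 0%nat. intros. replace (c - c) with (RtoC 0) by ring.
  rewrite Cmod_0. auto. Qed.

Lemma cv_ext u v l : (forall n, u n = v n) -> cv u l -> cv v l.
Proof. intros He H eps Hp. destruct (H eps Hp) as [N HN]. exists N. intros. rewrite <- He. auto. Qed.

Lemma cv_ev u v l : (exists N0, forall n, (N0 <= n)%nat -> u n = v n) -> cv u l -> cv v l.
Proof. intros [N0 He] H eps Hp. destruct (H eps Hp) as [N HN]. exists (N + N0)%nat.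
  intros. rewrite <- He by lia. apply HN. lia. Qed.

Lemma cv_plus u v a b : cv u a -> cv v b -> cv (fun n => u n + v n) (a + b).
Proof.
  intros Hu Hv eps He.
  destruct (Hu (eps/2)%R) as [N1 H1]; [lra|].
  destruct (Hv (eps/2)%R) as [N2 H2]; [lra|].
  exists (N1 + N2)%nat. intros n Hn.
  replace (u n + v n - (a + b)) with ((u n - a) + (v n - b)) by ring.
  eapply Rle_lt_trans. apply Cmod_tri.
  specialize (H1 n ltac:(lia)). specialize (H2 n ltac:(lia)). lra.
Qed.

Lemma cv_opp u a : cv u a -> cv (fun n => - u n) (- a).
Proof. intros H eps He. destruct (H eps He) as [N HN]. exists N. intros.
  replace (- u n - - a) with (- (u n - a)) by ring. rewrite Cmod_opp. auto. Qed.

Lemma cv_minus u v a b : cv u a -> cv v b -> cv (fun n => u n - v n) (a - b).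
Proof. intros. apply (cv_plus u (fun n => - v n)); auto. apply cv_opp; auto. Qed.

Lemma cv_bounded u l : cv u l -> exists M, (0 < M)%R /\ forall n, (Cmod (u n) <= M)%R.
Proof.
  intros H. destruct (H 1%R) as [N HN]; [lra|].
  assert (Hf : forall K, exists M, (0 < M)%R /\ forall n, (n < K)%nat -> (Cmod (u n) <= M)%R).
  { induction K.
    - exists 1%R. split; [lra|]. intros; lia.
    - destruct IHK as [M [HM HK]]. exists (Rmax M (Cmod (u K))). split.
      + eapply Rlt_le_trans; [exact HM|]. apply Rmax_l.
      + intros n Hn. destruct (Nat.eq_dec n K).
        * subst. apply Rmax_r.
        * eapply Rle_trans; [apply HK; lia|]. apply Rmax_l. }
  destruct (Hf N) as [M [HM HK]].
  exists (Rmax M (Cmod l + 1)). split.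
  - eapply Rlt_le_trans; [exact HM|]. apply Rmax_l.
  - intros n. destruct (Compare_dec.le_lt_dec N n).
    + specialize (HN n l0). pose proof (Cmod_rev (u n) l).
      eapply Rle_trans; [|apply Rmax_r]. lra.
    + eapply Rle_trans; [apply HK; lia|]. apply Rmax_l.
Qed.

Lemma cv_mult u v a b : cv u a -> cv v b -> cv (fun n => u n * v n) (a * b).
Proof.
  intros Hu Hv eps He.
  destruct (cv_bounded u a Hu) as [M [HM HMb]].
  set (K := (M + Cmod b + 1)%R).
  assert (HK : (0 < K)%R) by (unfold K; pose proof (Cmod_ge_0 b); lra).
  destruct (Hu (eps / (2 * K))%R) as [N1 H1].
  { apply Rdiv_lt_0_compat; lra. }
  destruct (Hv (eps / (2 * K))%R) as [N2 H2].
  { apply Rdiv_lt_0_compat; lra. }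
  exists (N1 + N2)%nat. intros n Hn.
  replace (u n * v n - a * b) with (u n * (v n - b) + (u n - a) * b) by ring.
  eapply Rle_lt_trans. apply Cmod_tri. rewrite !Cmod_mult.
  specialize (H1 n ltac:(lia)). specialize (H2 n ltac:(lia)).
  pose proof (HMb n). pose proof (Cmod_ge_0 (v n - b)). pose proof (Cmod_ge_0 (u n - a)).
  pose proof (Cmod_ge_0 b).
  assert (Ha : (Cmod (u n) * Cmod (v n - b) <= M * (eps / (2 * K)))%R).
  { apply Rmult_le_compat; auto. apply Cmod_ge_0. lra. }
  assert (Hb : (Cmod (u n - a) * Cmod b <= (eps / (2 * K)) * Cmod b)%R).
  { apply Rmult_le_compat_r; lra. }
  assert (Hc : (M * (eps / (2 * K)) + (eps / (2 * K)) * Cmod b < eps)%R).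
  { replace (M * (eps / (2 * K)) + (eps / (2 * K)) * Cmod b)%R with
      (eps * ((M + Cmod b) / (2 * K)))%R by (field; lra).
    assert ((M + Cmod b) / (2 * K) < 1)%R.
    { apply (Rmult_lt_reg_r (2 * K)). lra. unfold Rdiv. rewrite Rmult_assoc, Rinv_l by lra.
      unfold K. lra. }
    nra. }
  lra.
Qed.

Lemma cv_scal c u a : cv u a -> cv (fun n => c * u n) (c * a).
Proof. intros. apply (cv_mult (fun _ => c)); auto. apply cv_const. Qed.

Lemma cv_sub u l (phi : nat -> nat) :
  (forall N, exists M, forall n, (M <= n)%nat -> (N <= phi n)%nat) ->
  cv u l -> cv (fun n => u (phi n)) l.
Proof.
  intros Hp H eps He. destruct (H eps He) as [N HN]. destruct (Hp N) as [M HM].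
  exists M. intros. apply HN. apply HM. auto.
Qed.

Lemma cv_sub_ge u l (phi : nat -> nat) :
  (forall n, (n <= phi n)%nat) -> cv u l -> cv (fun n => u (phi n)) l.
Proof. intros Hp. apply cv_sub. intros N. exists N. intros. specialize (Hp n). lia. Qed.

Lemma cv_shift u l k : cv u l -> cv (fun n => u (n + k)%nat) l.
Proof. apply cv_sub_ge. intros; lia. Qed.

Lemma cv_shift_back u l k : cv u l -> cv (fun n => u (n - k)%nat) l.
Proof. apply cv_sub. intros N. exists (N + k)%nat. intros. lia. Qed.

Lemma cv_inv u l : cv u l -> l <> 0 -> cv (fun n => / u n) (/ l).
Proof.
  intros H Hl eps He.
  assert (Hl' : (0 < Cmod l)%R) by (apply Cmod_gt_0; auto).
  destruct (H (Cmod l / 2)%R) as [N1 H1]; [lra|].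
  destruct (H (eps * (Cmod l * Cmod l) / 2)%R) as [N2 H2].
  { apply Rmult_lt_0_compat; [|lra]. apply Rmult_lt_0_compat; nra. }
  exists (N1 + N2)%nat. intros n Hn.
  specialize (H1 n ltac:(lia)). specialize (H2 n ltac:(lia)).
  pose proof (Cmod_rev l (u n)). rewrite Cmod_sym in H1.
  assert (Hu : (Cmod l / 2 <= Cmod (u n))%R) by lra.
  assert (Hun : u n <> 0). { intros Hz. rewrite Hz, Cmod_0 in Hu. lra. }
  replace (/ u n - / l) with ((l - u n) / (u n * l)) by (field; auto).
  rewrite Cmod_div by (apply Cmult_neq_0; auto).
  rewrite Cmod_mult. rewrite Cmod_sym.
  apply (Rmult_lt_reg_r (Cmod (u n) * Cmod l)). nra.
  unfold Rdiv. rewrite Rmult_assoc, Rinv_l by nra. rewrite Rmult_1_r.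
  assert (0 <= eps * Cmod l * (Cmod (u n) - Cmod l / 2))%R.
  { apply Rmult_le_pos; [|lra]. apply Rmult_le_pos; lra. }
  nra.
Qed.

Lemma cv_div u v a b : cv u a -> cv v b -> b <> 0 -> cv (fun n => u n / v n) (a / b).
Proof. intros. apply cv_mult; auto. apply cv_inv; auto. Qed.

Lemma cv_le u l (w : nat -> R) :
  (exists N0, forall n, (N0 <= n)%nat -> (Cmod (u n - l) <= w n)%R) ->
  (forall eps, (0 < eps)%R -> exists N, forall n, (N <= n)%nat -> (w n < eps)%R) ->
  cv u l.
Proof.
  intros [N0 H0] Hw eps He. destruct (Hw eps He) as [N HN]. exists (N + N0)%nat.
  intros. eapply Rle_lt_trans. apply H0; lia. apply HN; lia.
Qed.

Lemma geom_small (r K : R) : (0 <= r < 1)%R ->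
  forall eps, (0 < eps)%R -> exists N, forall n, (N <= n)%nat -> (K * r ^ n < eps)%R.
Proof.
  intros Hr eps He.
  destruct (pow_lt_1_zero r ltac:(rewrite Rabs_right; lra) (eps / (Rabs K + 1))%R) as [N HN].
  { apply Rdiv_lt_0_compat; auto. pose proof (Rabs_pos K); lra. }
  exists N. intros n Hn. specialize (HN n Hn).
  rewrite Rabs_right in HN by (apply Rle_ge, pow_le; lra).
  assert (0 <= r ^ n)%R by (apply pow_le; lra).
  pose proof (Rle_abs K). pose proof (Rabs_pos K).
  apply (Rle_lt_trans _ ((Rabs K + 1) * r ^ n)). nra.
  apply (Rmult_lt_compat_l (Rabs K + 1)) in HN; [|lra].
  replace ((Rabs K + 1) * (eps / (Rabs K + 1)))%R with eps in HN by (field; lra). auto.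
Qed.

Definition ccauchy (u : nat -> C) :=
  forall eps, (0 < eps)%R -> exists N, forall m n, (N <= m)%nat -> (N <= n)%nat ->
    (Cmod (u m - u n) < eps)%R.

Lemma ccauchy_cv u : ccauchy u -> exists l, cv u l.
Proof.
  intros H.
  assert (Hre : Cauchy_crit (fun n => Re (u n))).
  { intros eps He. destruct (H eps He) as [N HN]. exists N. intros n m Hn Hm.
    unfold Rdist. eapply Rle_lt_trans; [|apply (HN n m); lia].
    replace (Re (u n) - Re (u m))%R with (Re (u n - u m)) by reflexivity.
    apply re_le_Cmod. }
  assert (Him : Cauchy_crit (fun n => Im (u n))).
  { intros eps He. destruct (H eps He) as [N HN]. exists N. intros n m Hn Hm.
    unfold Rdist. eapply Rle_lt_trans; [|apply (HN n m); lia].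
    replace (Im (u n) - Im (u m))%R with (Im (u n - u m)) by reflexivity.
    eapply Rle_trans; [apply Rmax_r|apply Rmax_Cmod]. }
  destruct (Rcomplete.R_complete _ Hre) as [a Ha].
  destruct (Rcomplete.R_complete _ Him) as [b Hb].
  exists (a, b). intros eps He.
  destruct (Ha (eps/2)%R) as [N1 H1]; [lra|].
  destruct (Hb (eps/2)%R) as [N2 H2]; [lra|].
  exists (N1 + N2)%nat. intros n Hn.
  specialize (H1 n ltac:(lia)). specialize (H2 n ltac:(lia)). unfold Rdist in *.
  eapply Rle_lt_trans. apply Cmod_2Rmax.
  (* crude: sqrt 2 * max < eps since max < eps/2 and sqrt 2 < 2 *)
  assert (Hs : (sqrt 2 < 2)%R).
  { rewrite <- (sqrt_pow2 2) at 2 by lra. apply sqrt_lt_1; lra. }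
  assert (Hm : (Rmax (Rabs (fst (u n - (a, b))%C)) (Rabs (snd (u n - (a, b))%C)) < eps / 2)%R).
  { apply Rmax_lub_lt; simpl; auto. }
  pose proof (sqrt_pos 2).
  pose proof (Rmax_l (Rabs (fst (u n - (a, b))%C)) (Rabs (snd (u n - (a, b))%C))).
  pose proof (Rabs_pos (fst (u n - (a, b))%C)).
  nra.
Qed.

Lemma cv_filterlim u l : cv u l -> filterlim u eventually (locally l).
Proof.
  intros H. apply filterlim_locally. intros eps.
  destruct (H eps (cond_pos eps)) as [N HN]. exists N. intros n Hn.
  apply C_NormedModule_mixin_compat1. apply HN. lia.
Qed.

Lemma cv_bounded_below u l : cv u l -> l <> 0 -> (forall n, u n <> 0) ->
  exists m, (0 < m)%R /\ forall n, (m <= Cmod (u n))%R.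
Proof.
  intros H Hl Hn.
  assert (Hl' : (0 < Cmod l)%R) by (apply Cmod_gt_0; auto).
  destruct (H (Cmod l / 2)%R) as [N HN]; [lra|].
  assert (Hf : forall K, exists m, (0 < m)%R /\ forall n, (n < K)%nat -> (m <= Cmod (u n))%R).
  { induction K.
    - exists 1%R. split; [lra|]. intros; lia.
    - destruct IHK as [m [Hm HK]]. exists (Rmin m (Cmod (u K))). split.
      + apply Rmin_pos; auto. apply Cmod_gt_0; auto.
      + intros n Hn'. destruct (Nat.eq_dec n K).
        * subst. apply Rmin_r.
        * eapply Rle_trans; [apply Rmin_l|]. apply HK; lia. }
  destruct (Hf N) as [m [Hm HK]].
  exists (Rmin m (Cmod l / 2)). split.
  - apply Rmin_pos; lra.
  - intros n. destruct (Compare_dec.le_lt_dec N n).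
    + specialize (HN n l0). rewrite Cmod_sym in HN. pose proof (Cmod_rev l (u n)).
      eapply Rle_trans; [apply Rmin_r|]. lra.
    + eapply Rle_trans; [apply Rmin_l|]. apply HK; lia.
Qed.

Close Scope C_scope.
Open Scope R_scope.
Local Open Scope C_scope.

Fixpoint rs (g : nat -> R) (N : nat) : R :=
  match N with O => 0%R | S M => (rs g M + g (S M))%R end.

Lemma rs_nonneg g N : (forall n, 0 <= g n)%R -> (0 <= rs g N)%R.
Proof. intros H. induction N; simpl; [lra|]. specialize (H (S N)). lra. Qed.

Lemma rs_le g h N : (forall n, (1 <= n <= N)%nat -> (g n <= h n)%R) -> (rs g N <= rs h N)%R.
Proof. induction N; intros H; simpl; [lra|].
  assert (rs g N <= rs h N)%R by (apply IHN; intros; apply H; lia).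
  specialize (H (S N) ltac:(lia)). lra. Qed.

Lemma rs_geom (K r : R) N k : (0 <= K)%R -> (0 <= r < 1)%R ->
  (rs (fun n => K * r ^ (N + n)) k <= K * r ^ (S N) / (1 - r))%R.
Proof.
  intros HK Hr.
  assert (Heq : forall k, ((1 - r) * rs (fun n => r ^ (N + n)) k = r ^ (S N) - r ^ (S (N + k)))%R).
  { induction k0; simpl.
    - rewrite Nat.add_0_r. ring.
    - replace (N + S k0)%nat with (S (N + k0)) by lia. simpl.
      rewrite Rmult_plus_distr_l, IHk0. simpl. ring. }
  assert (Hk : (rs (fun n => K * r ^ (N + n)) k = K * rs (fun n => r ^ (N + n)) k)%R).
  { induction k; simpl; [ring|]. rewrite IHk. ring. }
  rewrite Hk. specialize (Heq k).
  assert (0 <= r ^ S (N + k))%R by (apply pow_le; lra).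
  assert (rs (fun n => r ^ (N + n)) k <= r ^ S N / (1 - r))%R.
  { apply (Rmult_le_reg_l (1 - r)). lra. rewrite Heq.
    replace ((1 - r) * (r ^ S N / (1 - r)))%R with (r ^ S N)%R by (field; lra). lra. }
  replace (K * r ^ S N / (1 - r))%R with (K * (r ^ S N / (1 - r)))%R by (field; lra).
  apply Rmult_le_compat_l; auto.
Qed.

Lemma exp_le x y : (x <= y)%R -> (exp x <= exp y)%R.
Proof. intros [H|H]. left; apply exp_increasing; auto. subst; lra. Qed.

Lemma exp_nat_mul n x : exp (INR n * x) = (exp x ^ n)%R.
Proof. induction n.
  - replace (INR 0 * x)%R with 0%R by (simpl; ring). rewrite exp_0. simpl. auto.
  - rewrite S_INR, Rmult_plus_distr_r, Rmult_1_l, exp_plus, IHn. simpl. ring. Qed.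

Lemma pprod_add f N k : pprod f (N + k) = pprod f N * pprod (fun n => f (N + n)%nat) k.
Proof. induction k; simpl. rewrite Nat.add_0_r. ring.
  replace (N + S k)%nat with (S (N + k)) by lia. simpl. rewrite IHk. ring. Qed.

Lemma pprod_mult f g N : pprod (fun n => f n * g n) N = pprod f N * pprod g N.
Proof. induction N; simpl. ring. rewrite IHN. ring. Qed.

Lemma pprod_ext f g N : (forall n, (1 <= n <= N)%nat -> f n = g n) -> pprod f N = pprod g N.
Proof. induction N; intros H; simpl; auto. rewrite IHN by (intros; apply H; lia).
  rewrite H by lia. auto. Qed.

Lemma pprod_bounds f k :
  (Cmod (pprod f k) <= exp (rs (fun n => Cmod (f n - 1)) k))%R /\
  (Cmod (pprod f k - 1) <= rs (fun n => Cmod (f n - 1)) k * exp (rs (fun n => Cmod (f n - 1)) k))%R.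
Proof.
  induction k; simpl.
  - rewrite exp_0. replace (1 - 1) with (RtoC 0) by ring. rewrite Cmod_0, Cmod_1. lra.
  - destruct IHk as [H1 H2].
    set (s := rs (fun n => Cmod (f n - 1)) k) in *.
    set (a := Cmod (f (S k) - 1)).
    assert (Ha : (0 <= a)%R) by apply Cmod_ge_0.
    assert (Hs : (0 <= s)%R) by (apply rs_nonneg; intros; apply Cmod_ge_0).
    assert (Hf : (Cmod (f (S k)) <= 1 + a)%R) by apply Cmod_le_1plus.
    assert (He : (1 + a <= exp a)%R) by apply exp_ineq1_le.
    rewrite exp_plus. split.
    + rewrite Cmod_mult. pose proof (Cmod_ge_0 (pprod f k)).
      apply Rmult_le_compat; auto. apply Cmod_ge_0. lra.
    + replace (pprod f k * f (S k) - 1) with ((pprod f k - 1) * f (S k) + (f (S k) - 1)) by ring.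
      eapply Rle_trans. apply Cmod_tri. rewrite Cmod_mult. fold a.
      pose proof (Cmod_ge_0 (pprod f k - 1)).
      assert (Cmod (pprod f k - 1) * Cmod (f (S k)) <= s * exp s * (1 + a))%R.
      { apply Rmult_le_compat; auto. apply Cmod_ge_0. }
      assert (1 <= exp s)%R. { pose proof (exp_ineq1_le s). lra. }
      assert (1 <= exp a)%R. { lra. }
      pose proof (exp_pos s). pose proof (exp_pos a).
      assert (s * exp s * (1 + a) <= s * (exp s * exp a))%R.
      { rewrite Rmult_assoc. apply Rmult_le_compat_l; auto. apply Rmult_le_compat_l; lra. }
      assert (a <= a * (exp s * exp a))%R.
      { rewrite <- (Rmult_1_r a) at 1. apply Rmult_le_compat_l; auto. nra. }
      lra.
Qed.

Lemma prod_exists f (K r : R) : (0 <= K)%R -> (0 <= r < 1)%R ->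
  (forall n, (1 <= n)%nat -> (Cmod (f n - 1) <= K * r ^ n)%R) ->
  exists P, cv (pprod f) P.
Proof.
  intros HK Hr Hf. apply ccauchy_cv.
  set (s0 := (K / (1 - r))%R).
  assert (Hs0 : (0 <= s0)%R) by (unfold s0; apply Rdiv_le_0_compat; lra).
  assert (Hrn : forall n, (r ^ n <= 1)%R) by (intros; rewrite <- (pow1 n); apply pow_incr; lra).
  assert (Hrn0 : forall n, (0 <= r ^ n)%R) by (intros; apply pow_le; lra).
  assert (Htail : forall n k, (rs (fun j => Cmod (f (n + j)%nat - 1)) k <= K * r ^ n / (1 - r))%R).
  { intros n k. eapply Rle_trans.
    - apply (rs_le _ (fun j => K * r ^ (n + j))%R). intros j Hj. apply Hf. lia.
    - eapply Rle_trans. apply rs_geom; auto. simpl.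
      unfold Rdiv. apply Rmult_le_compat_r. left; apply Rinv_0_lt_compat; lra.
      specialize (Hrn0 n). assert (0 <= K * r ^ n)%R by (apply Rmult_le_pos; lra). nra. }
  assert (Hts0 : forall n k, (rs (fun j => Cmod (f (n + j)%nat - 1)) k <= s0)%R).
  { intros n k. eapply Rle_trans. apply Htail. unfold s0, Rdiv.
    apply Rmult_le_compat_r. left; apply Rinv_0_lt_compat; lra.
    specialize (Hrn n). nra. }
  assert (HB : forall n, (Cmod (pprod f n) <= exp s0)%R).
  { intros n. eapply Rle_trans. apply pprod_bounds. apply exp_le.
    specialize (Hts0 0%nat n). simpl in Hts0. exact Hts0. }
  assert (Hd : forall n k, (Cmod (pprod f (n + k) - pprod f n) <=
      exp s0 * exp s0 * (K / (1 - r)) * r ^ n)%R).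
  { intros n k. rewrite pprod_add.
    replace (pprod f n * pprod (fun n0 : nat => f (n + n0)%nat) k - pprod f n)
      with (pprod f n * (pprod (fun n0 : nat => f (n + n0)%nat) k - 1)) by ring.
    rewrite Cmod_mult.
    destruct (pprod_bounds (fun n0 : nat => f (n + n0)%nat) k) as [_ H2].
    set (t := rs (fun n0 : nat => Cmod (f (n + n0)%nat - 1)) k) in *.
    assert (Ht0 : (0 <= t)%R) by (apply rs_nonneg; intros; apply Cmod_ge_0).
    assert (Ht1 : (t <= K * r ^ n / (1 - r))%R) by apply Htail.
    assert (Ht2 : (exp t <= exp s0)%R) by (apply exp_le; apply Hts0).
    assert (Ht3 : (t * exp t <= K * r ^ n / (1 - r) * exp s0)%R).
    { apply Rmult_le_compat; auto. left; apply exp_pos. }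
    pose proof (Cmod_ge_0 (pprod f n)).
    eapply Rle_trans.
    { apply Rmult_le_compat. apply Cmod_ge_0. apply Cmod_ge_0. apply HB.
      eapply Rle_trans. exact H2. exact Ht3. }
    right. field. lra. }
  intros eps He.
  destruct (geom_small r (exp s0 * exp s0 * (K / (1 - r)))%R Hr eps He) as [N HN].
  exists N. intros m n Hm Hn.
  destruct (Compare_dec.le_lt_dec n m).
  - replace m with (n + (m - n))%nat by lia. eapply Rle_lt_trans. apply Hd. apply HN; auto.
  - rewrite Cmod_sym. replace n with (m + (n - m))%nat by lia. eapply Rle_lt_trans. apply Hd. apply HN; auto.
Qed.

Lemma prod_nonzero f g P Q : (forall n, (1 <= n)%nat -> f n * g n = 1) -> cv (pprod f) P -> cv (pprod g) Q -> P <> 0.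
Proof.
  intros Hfg HP HQ.
  assert (H1 : cv (fun n => pprod f n * pprod g n) (P * Q)) by (apply cv_mult; auto).
  assert (H2 : forall n, pprod f n * pprod g n = 1).
  { intros n. rewrite <- pprod_mult. induction n; simpl; auto. rewrite IHn, Hfg by lia. ring. }
  assert (P * Q = 1).
  { apply (cv_unique (fun n => pprod f n * pprod g n)); auto.
    eapply cv_ext; [|apply cv_const]. intros; simpl; rewrite H2; auto. }
  intros HP0. rewrite HP0 in H. assert (RtoC 0 = RtoC 1) by (rewrite <- H; ring).
  injection H0. lra.
Qed.

Close Scope C_scope.
Open Scope R_scope.
Local Open Scope C_scope.

Lemma pprod_S f n : pprod f (S n) = pprod f n * f (S n).
Proof. reflexivity. Qed.
Lemma pprod_0 f : pprod f 0 = 1.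
Proof. reflexivity. Qed.

Definition ep (c d : C) (N : nat) : C := pprod (fun n => 1 + E (c + nC n * d)) N.
Definition eP (c d : C) : C := epsilon (inhabits (RtoC 0)) (fun P => cv (ep c d) P).

Lemma Cmod_E_nd c d n : Cmod (E (c + nC n * d)) = (exp (Re c) * exp (Re d) ^ n)%R.
Proof. rewrite Cmod_cexp, re_plus, re_nC, exp_plus, exp_nat_mul. auto. Qed.

Lemma ep_exists c d : (Re d < 0)%R -> exists P, cv (ep c d) P.
Proof.
  intros Hd. apply (prod_exists _ (exp (Re c)) (exp (Re d))).
  - left; apply exp_pos.
  - split. left; apply exp_pos. rewrite <- exp_0. apply exp_increasing. auto.
  - intros n Hn. replace (1 + E (c + nC n * d) - 1) with (E (c + nC n * d)) by ring.
    rewrite Cmod_E_nd. lra.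
Qed.

Lemma eP_cv c d : (Re d < 0)%R -> cv (ep c d) (eP c d).
Proof. intros Hd. unfold eP. apply epsilon_spec. apply ep_exists; auto. Qed.

Lemma eP_ne0 c d : (Re d < 0)%R -> (Re c + Re d < 0)%R -> eP c d <> 0.
Proof.
  intros Hd Hcd.
  set (m := exp (Re c + Re d)).
  assert (Hm : (0 < m < 1)%R). { unfold m. split. apply exp_pos. rewrite <- exp_0. apply exp_increasing; auto. }
  assert (HE : forall n, (1 <= n)%nat -> (Cmod (E (c + nC n * d)) <= m)%R).
  { intros n Hn. rewrite Cmod_cexp, re_plus, re_nC. apply exp_le.
    assert (1 <= INR n)%R by (apply (le_INR 1); auto). nra. }
  assert (Hnz : forall n, (1 <= n)%nat -> 1 + E (c + nC n * d) <> 0).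
  { intros n Hn Hz. assert (E (c + nC n * d) = - (1)).
    { replace (E (c + nC n * d)) with ((1 + E (c + nC n * d)) - 1) by ring. rewrite Hz. ring. }
    specialize (HE n Hn). rewrite H, Cmod_opp, Cmod_1 in HE. lra. }
  set (g := fun n => match n with O => RtoC 1 | _ => / (1 + E (c + nC n * d)) end).
  destruct (prod_exists g (exp (Re c) / (1 - m)) (exp (Re d))) as [Q HQ].
  - apply Rdiv_le_0_compat. left; apply exp_pos. lra.
  - split. left; apply exp_pos. rewrite <- exp_0. apply exp_increasing. auto.
  - intros n Hn. unfold g. destruct n; [lia|].
    specialize (Hnz (S n) Hn). specialize (HE (S n) Hn).
    replace (/ (1 + E (c + nC (S n) * d)) - 1) with (- E (c + nC (S n) * d) / (1 + E (c + nC (S n) * d)))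
      by (field; auto).
    rewrite Cmod_div, Cmod_opp by auto. rewrite Cmod_E_nd in *.
    pose proof (Cmod_rev 1 (- E (c + nC (S n) * d))). rewrite Cmod_1, Cmod_opp, Cmod_E_nd in H.
    replace (1 - - E (c + nC (S n) * d)) with (1 + E (c + nC (S n) * d)) in H by ring.
    assert (Hp : (0 <= exp (Re c) * exp (Re d) ^ S n)%R).
    { apply Rmult_le_pos. left; apply exp_pos. apply pow_le. left; apply exp_pos. }
    assert (HX : (1 - m <= Cmod (1 + E (c + nC (S n) * d)))%R) by lra.
    apply (Rle_trans _ (exp (Re c) * exp (Re d) ^ S n * / (1 - m))%R).
    + unfold Rdiv. apply Rmult_le_compat_l; auto. apply Rinv_le_contravar; lra.
    + right. field. lra.
  - apply (prod_nonzero (fun n => 1 + E (c + nC n * d)) g _ Q).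
    + intros n Hn. unfold g. destruct n; [lia|].
      field. apply Hnz. lia.
    + apply eP_cv; auto.
    + auto.
Qed.

Lemma re_2 (x : C) : Re (2 * x) = (2 * Re x)%R.
Proof. apply (re_RC 2). Qed.

Lemma e_cong c d c' d' : E c = E c' -> E d = E d' -> eP c d = eP c' d'.
Proof.
  intros Hc Hd.
  assert (H : ep c d = ep c' d').
  { apply functional_extensionality. intros N. unfold ep. apply pprod_ext. intros n _.
    rewrite !cexp_add, !cexp_nat, Hc, Hd. auto. }
  unfold eP. rewrite H. auto.
Qed.

Lemma e_split c d : (Re d < 0)%R -> eP c d = eP (c - d) (2 * d) * eP c (2 * d).
Proof.
  intros Hd.
  assert (Hd2 : (Re (2 * d) < 0)%R) by (rewrite re_2; lra).
  assert (Hf : forall N, ep c d (2 * N) = ep (c - d) (2 * d) N * ep c (2 * d) N).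
  { induction N. unfold ep; simpl. ring.
    replace (2 * S N)%nat with (S (S (2 * N))) by lia. unfold ep in *. rewrite !pprod_S, IHN.
    replace (c + nC (S (2 * N)) * d) with (c - d + nC (S N) * (2 * d)) by (nCsimpl; ring).
    replace (c + nC (S (S (2 * N))) * d) with (c + nC (S N) * (2 * d)) by (nCsimpl; ring).
    ring. }
  apply (cv_unique (fun N => ep c d (2 * N))).
  - apply (cv_sub_ge (ep c d)). intros; lia. apply eP_cv; auto.
  - eapply cv_ext. intros n. symmetry. apply Hf.
    apply cv_mult; apply eP_cv; auto.
Qed.

Lemma e_pair c d : (Re d < 0)%R -> eP c d * eP (c + iota) d = eP (2 * c + iota) (2 * d).
Proof.
  intros Hd.
  assert (Hd2 : (Re (2 * d) < 0)%R) by (rewrite re_2; lra).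
  assert (Hf : forall N, ep c d N * ep (c + iota) d N = ep (2 * c + iota) (2 * d) N).
  { intros N. unfold ep. rewrite <- pprod_mult. apply pprod_ext. intros n _.
    replace (c + iota + nC n * d) with ((c + nC n * d) + iota) by ring.
    replace (2 * c + iota + nC n * (2 * d)) with ((c + nC n * d) + (c + nC n * d) + iota) by ring.
    set (x := c + nC n * d). rewrite !cexp_plus_iota, (cexp_add x x). ring. }
  apply (cv_unique (fun N => ep c d N * ep (c + iota) d N)).
  - apply cv_mult; apply eP_cv; auto.
  - eapply cv_ext. intros n. symmetry. apply Hf. apply eP_cv; auto.
Qed.

Lemma e_shift c d : (Re d < 0)%R -> eP c d = (1 + E (c + d)) * eP (c + d) d.
Proof.
  intros Hd.
  assert (Hf : forall N, ep c d (S N) = (1 + E (c + d)) * ep (c + d) d N).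
  { induction N.
    - unfold ep; simpl. replace (c + nC 1 * d) with (c + d) by (nCsimpl; ring). ring.
    - unfold ep in *. rewrite pprod_S, IHN, pprod_S.
      replace (c + nC (S (S N)) * d) with (c + d + nC (S N) * d) by (nCsimpl; ring). ring. }
  apply (cv_unique (fun N => ep c d (N + 1))).
  - apply cv_shift. apply eP_cv; auto.
  - eapply cv_ext. intros n. rewrite Nat.add_1_r. symmetry. apply Hf.
    apply cv_scal. apply eP_cv; auto.
Qed.

Close Scope C_scope.
Open Scope R_scope.
Local Open Scope C_scope.

Definition tterm (a b : C) (k : nat) : C := E (nC k * nC k * a + nC k * b).

Fixpoint tsum (a b : C) (n : nat) : C :=
  match n with
  | O => 1
  | S m => tsum a b m + tterm a b (S m) + tterm a (- b) (S m)
  end.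

Lemma tsum_S a b m : tsum a b (Datatypes.S m) = tsum a b m + tterm a b (Datatypes.S m) + tterm a (- b) (Datatypes.S m).
Proof. reflexivity. Qed.

Definition TH (a b : C) : C := epsilon (inhabits (RtoC 0)) (fun s => cv (tsum a b) s).

Ltac Eeq := f_equal; nCsimpl; ring.

Lemma tt_bound a b : (Re a < 0)%R ->
  forall k, (Cmod (tterm a b k) <= exp ((Re b - Re a) ^ 2 / (- 4 * Re a)) * exp (Re a) ^ k)%R.
Proof.
  intros Ha k. unfold tterm. rewrite Cmod_cexp, re_plus, !re_mult.
  unfold nC. rewrite !re_R. simpl Im. rewrite <- exp_nat_mul, <- exp_plus.
  apply exp_le. set (x := INR k). set (al := Re a). set (be := Re b).
  replace (x * x * al - 0 * Im a + (x * be - 0 * Im b))%R with (x * x * al + x * be)%R by ring.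
  assert (H : (x * x * al + x * be - ((be - al) ^ 2 / (- 4 * al) + x * al) =
     - (2 * al * x + (be - al)) ^ 2 / (- 4 * al))%R).
  { field. unfold al; lra. }
  assert (H2 : (0 <= (2 * al * x + (be - al)) ^ 2 / (- 4 * al))%R).
  { apply Rdiv_le_0_compat. apply pow2_ge_0. unfold al; lra. }
  unfold Rdiv in *. lra.
Qed.

Lemma tsum_diff a b n k : (Cmod (tsum a b (n + k) - tsum a b n) <=
   rs (fun j => Cmod (tterm a b (n + j)) + Cmod (tterm a (- b) (n + j)))%R k)%R.
Proof.
  induction k; simpl.
  - rewrite Nat.add_0_r. replace (tsum a b n - tsum a b n) with (RtoC 0) by ring. rewrite Cmod_0. lra.
  - replace (n + S k)%nat with (S (n + k)) by lia. simpl.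
    replace (tsum a b (n + k) + tterm a b (S (n + k)) + tterm a (- b) (S (n + k)) - tsum a b n)
      with ((tsum a b (n + k) - tsum a b n) + tterm a b (S (n + k)) + tterm a (- b) (S (n + k))) by ring.
    eapply Rle_trans. apply Cmod_tri. eapply Rle_trans. apply Rplus_le_compat_r. apply Cmod_tri. lra.
Qed.

Lemma ts_exists a b : (Re a < 0)%R -> exists s, cv (tsum a b) s.
Proof.
  intros Ha. apply ccauchy_cv.
  set (r := exp (Re a)).
  assert (Hr : (0 <= r < 1)%R). { unfold r. split. left; apply exp_pos. rewrite <- exp_0. apply exp_increasing; auto. }
  set (K := (exp ((Re b - Re a) ^ 2 / (- 4 * Re a)) + exp ((Re (- b) - Re a) ^ 2 / (- 4 * Re a)))%R).
  assert (HK : (0 <= K)%R) by (unfold K; pose proof (exp_pos ((Re b - Re a) ^ 2 / (- 4 * Re a))); pose proof (exp_pos ((Re (- b) - Re a) ^ 2 / (- 4 * Re a))); lra).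
  assert (Hd : forall n k, (Cmod (tsum a b (n + k) - tsum a b n) <= K * r ^ (S n) / (1 - r))%R).
  { intros n k. eapply Rle_trans. apply tsum_diff. eapply Rle_trans; [|apply rs_geom; auto].
    apply rs_le. intros j Hj. unfold K. rewrite Rmult_plus_distr_r.
    apply Rplus_le_compat; apply tt_bound; auto. }
  intros eps He.
  destruct (geom_small r (K * r / (1 - r))%R Hr eps He) as [N HN].
  exists N. intros m n Hm Hn.
  assert (Hg : forall n, (K * r ^ (S n) / (1 - r) = K * r / (1 - r) * r ^ n)%R).
  { intros. simpl. field. lra. }
  destruct (Compare_dec.le_lt_dec n m).
  - replace m with (n + (m - n))%nat by lia. eapply Rle_lt_trans. apply Hd. rewrite Hg. apply HN; auto.
  - rewrite Cmod_sym. replace n with (m + (n - m))%nat by lia. eapply Rle_lt_trans. apply Hd. rewrite Hg. apply HN; auto.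
Qed.

Lemma S_cv a b : (Re a < 0)%R -> cv (tsum a b) (TH a b).
Proof. intros Ha. unfold TH. apply epsilon_spec. apply ts_exists; auto. Qed.

Lemma tt_cv0 a b : (Re a < 0)%R -> cv (tterm a b) 0.
Proof.
  intros Ha. apply (cv_le _ _ (fun n => exp ((Re b - Re a) ^ 2 / (- 4 * Re a)) * exp (Re a) ^ n)%R).
  - exists 0%nat. intros n _. replace (tterm a b n - 0) with (tterm a b n) by ring. apply tt_bound; auto.
  - apply geom_small. split. left; apply exp_pos. rewrite <- exp_0. apply exp_increasing; auto.
Qed.

Lemma tsum_sym a b n : tsum a (- b) n = tsum a b n.
Proof. induction n; simpl; auto. rewrite IHn. replace (- - b) with b by ring. ring. Qed.

Lemma S_sym a b : TH a (- b) = TH a b.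
Proof. unfold TH. replace (tsum a (- b)) with (tsum a b); auto.
  apply functional_extensionality. intros; rewrite tsum_sym; auto. Qed.

Lemma tt_cong a b a' b' : E a = E a' -> E b = E b' -> forall k, tterm a b k = tterm a' b' k.
Proof. intros Ha Hb k. unfold tterm. rewrite <- nC_mul, !cexp_add, !cexp_nat, Ha, Hb. auto. Qed.

Lemma S_cong a b a' b' : E a = E a' -> E b = E b' -> TH a b = TH a' b'.
Proof.
  intros Ha Hb. assert (Hb' : E (- b) = E (- b')) by (rewrite !cexp_opp, Hb; auto).
  assert (H : tsum a b = tsum a' b').
  { apply functional_extensionality. intros n. induction n; simpl; auto.
    rewrite IHn, (tt_cong a b a' b'), (tt_cong a (- b) a' (- b')); auto. }
  unfold TH. rewrite H. auto.
Qed.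

Lemma tsum_dissect a b n :
  tsum a b (2 * n + 1) = tsum (4 * a) (2 * b) n +
     E (a + b) * (tsum (4 * a) (4 * a + 2 * b) n + tterm (4 * a) (- (4 * a + 2 * b)) (Datatypes.S n)).
Proof.
  induction n.
  - simpl. unfold tterm.
    replace (E (nC 1 * nC 1 * a + nC 1 * b)) with (E (a + b)) by Eeq.
    replace (E (nC 1 * nC 1 * a + nC 1 * - b))
      with (E (a + b) * E (nC 1 * nC 1 * (4 * a) + nC 1 * - (4 * a + 2 * b))) by (rewrite <- cexp_add; Eeq).
    ring.
  - replace (2 * Datatypes.S n + 1)%nat with (Datatypes.S (Datatypes.S (2 * n + 1))) by lia.
    rewrite !tsum_S, IHn.
    unfold tterm.
    replace (nC (Datatypes.S (2 * n + 1)) * nC (Datatypes.S (2 * n + 1)) * a + nC (Datatypes.S (2 * n + 1)) * b)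
      with (nC (Datatypes.S n) * nC (Datatypes.S n) * (4 * a) + nC (Datatypes.S n) * (2 * b)) by (nCsimpl; ring).
    replace (nC (Datatypes.S (2 * n + 1)) * nC (Datatypes.S (2 * n + 1)) * a + nC (Datatypes.S (2 * n + 1)) * - b)
      with (nC (Datatypes.S n) * nC (Datatypes.S n) * (4 * a) + nC (Datatypes.S n) * - (2 * b)) by (nCsimpl; ring).
    replace (nC (Datatypes.S (Datatypes.S (2 * n + 1))) * nC (Datatypes.S (Datatypes.S (2 * n + 1))) * a +
             nC (Datatypes.S (Datatypes.S (2 * n + 1))) * b)
      with (a + b + (nC (Datatypes.S n) * nC (Datatypes.S n) * (4 * a) + nC (Datatypes.S n) * (4 * a + 2 * b)))
      by (nCsimpl; ring).
    replace (nC (Datatypes.S (Datatypes.S (2 * n + 1))) * nC (Datatypes.S (Datatypes.S (2 * n + 1))) * a +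
             nC (Datatypes.S (Datatypes.S (2 * n + 1))) * - b)
      with (a + b + (nC (Datatypes.S (Datatypes.S n)) * nC (Datatypes.S (Datatypes.S n)) * (4 * a) +
             nC (Datatypes.S (Datatypes.S n)) * - (4 * a + 2 * b)))
      by (nCsimpl; ring).
    rewrite !cexp_add. ring.
Qed.

Lemma re_4 (x : C) : Re (4 * x) = (4 * Re x)%R.
Proof. apply (re_RC 4). Qed.

Lemma TH_D1 a b : (Re a < 0)%R -> TH a b = TH (4 * a) (2 * b) + E (a + b) * TH (4 * a) (4 * a + 2 * b).
Proof.
  intros Ha. assert (Ha4 : (Re (4 * a) < 0)%R) by (rewrite re_4; lra).
  apply (cv_unique (fun n => tsum a b (2 * n + 1))).
  - apply (cv_sub_ge (tsum a b)). intros; lia. apply S_cv; auto.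
  - eapply cv_ext. intros n. symmetry. apply tsum_dissect.
    replace (TH (4 * a) (2 * b) + E (a + b) * TH (4 * a) (4 * a + 2 * b))
      with (TH (4 * a) (2 * b) + E (a + b) * (TH (4 * a) (4 * a + 2 * b) + 0)) by ring.
    apply cv_plus. apply S_cv; auto. apply cv_scal. apply cv_plus. apply S_cv; auto.
    eapply cv_ext. intros n. rewrite <- Nat.add_1_r. reflexivity.
    apply cv_shift. apply tt_cv0; auto.
Qed.

Lemma TH_D2 a b : (Re a < 0)%R -> TH a b = TH (4 * a) (2 * b) + E (a - b) * TH (4 * a) (2 * b - 4 * a).
Proof.
  intros Ha. rewrite <- (S_sym a b). rewrite TH_D1 by auto.
  rewrite <- (S_sym (4 * a) (2 * b)), <- (S_sym (4 * a) (2 * b - 4 * a)).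
  assert (H1 : TH (4 * a) (2 * - b) = TH (4 * a) (- (2 * b))) by (apply S_cong; Eeq).
  assert (H2 : TH (4 * a) (4 * a + 2 * - b) = TH (4 * a) (- (2 * b - 4 * a))) by (apply S_cong; Eeq).
  rewrite H1, H2. replace (a + - b) with (a - b) by ring. auto.
Qed.

Close Scope C_scope.
Open Scope R_scope.
Local Open Scope C_scope.

Fixpoint csum (f : nat -> C) (n : nat) : C :=
  match n with O => 0 | Datatypes.S m => csum f m + f m end.

Lemma csum_S f n : csum f (Datatypes.S n) = csum f n + f n.
Proof. reflexivity. Qed.

Lemma csum_shift f n : csum f (Datatypes.S n) = f 0%nat + csum (fun i => f (Datatypes.S i)) n.
Proof. induction n. simpl. ring. rewrite csum_S, IHn. simpl. ring. Qed.

Lemma csum_plus f g n : csum (fun i => f i + g i) n = csum f n + csum g n.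
Proof. induction n; simpl. ring. rewrite IHn. ring. Qed.

Lemma csum_scal_r f c n : csum (fun i => f i * c) n = csum f n * c.
Proof. induction n; simpl. ring. rewrite IHn. ring. Qed.

Lemma csum_ext_lt f g n : (forall i, (i < n)%nat -> f i = g i) -> csum f n = csum g n.
Proof. induction n; intros H; simpl; auto. rewrite IHn by (intros; apply H; lia). rewrite H by lia. auto. Qed.

Lemma Cpow_add (Q : C) m n : Q ^ (m + n) = Q ^ m * Q ^ n.
Proof. induction m; simpl. ring. rewrite IHm. ring. Qed.

Section QB.
Variable Q : C.
Hypothesis HQ : forall k, (1 <= k)%nat -> 1 - Q ^ k <> 0.

Definition pQ (m : nat) : C := pprod (fun k => 1 - Q ^ k) m.

Lemma pQ_S m : pQ (Datatypes.S m) = pQ m * (1 - Q ^ (Datatypes.S m)).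
Proof. reflexivity. Qed.

Lemma pQ_ne0 m : pQ m <> 0.
Proof. induction m. unfold pQ; simpl. intros H; injection H; lra.
  rewrite pQ_S. apply Cmult_neq_0; auto. apply HQ; lia. Qed.

Definition qb (M i : nat) : C := if (i <=? M)%nat then pQ M / (pQ i * pQ (M - i)) else 0.

Lemma qb_0 M : qb M 0 = 1.
Proof. unfold qb. replace (0 <=? M)%nat with true by (symmetry; apply Nat.leb_le; lia).
  rewrite Nat.sub_0_r. replace (pQ 0) with (RtoC 1) by reflexivity. field. apply pQ_ne0. Qed.

Lemma qb_out M i : (M < i)%nat -> qb M i = 0.
Proof. intros H. unfold qb. destruct (Nat.leb_spec i M); auto. lia. Qed.

Lemma qb_MM M : qb M M = 1.
Proof. unfold qb. rewrite Nat.leb_refl, Nat.sub_diag. replace (pQ 0) with (RtoC 1) by reflexivity.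
  field. apply pQ_ne0. Qed.

Lemma qb_in M i : (i <= M)%nat -> qb M i = pQ M / (pQ i * pQ (M - i)).
Proof. intros H. unfold qb. destruct (Nat.leb_spec i M); auto. lia. Qed.

Lemma pascalA M i : qb (Datatypes.S M) (Datatypes.S i) = qb M i + Q ^ (Datatypes.S i) * qb M (Datatypes.S i).
Proof.
  destruct (Compare_dec.lt_eq_lt_dec i M) as [[Hlt|Heq]|Hgt].
  - destruct (Nat.le_exists_sub (Datatypes.S i) M ltac:(lia)) as [j [Hj _]]. subst M.
    rewrite !qb_in by lia.
    replace (Datatypes.S (j + Datatypes.S i) - Datatypes.S i)%nat with (Datatypes.S j) by lia.
    replace (j + Datatypes.S i - i)%nat with (Datatypes.S j) by lia.
    replace (j + Datatypes.S i - Datatypes.S i)%nat with j by lia.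
    rewrite (pQ_S (j + Datatypes.S i)), (pQ_S i), (pQ_S j).
    replace (Q ^ Datatypes.S (j + Datatypes.S i)) with (Q ^ Datatypes.S j * Q ^ Datatypes.S i)
      by (rewrite <- Cpow_add; f_equal; lia).
    pose proof (pQ_ne0 i). pose proof (pQ_ne0 j). pose proof (pQ_ne0 (j + Datatypes.S i)).
    pose proof (HQ (Datatypes.S i) ltac:(lia)). pose proof (HQ (Datatypes.S j) ltac:(lia)).
    field. auto.
  - subst. rewrite !qb_MM, qb_out by lia. ring.
  - rewrite !qb_out by lia. ring.
Qed.

Lemma pascalB M i : qb (Datatypes.S M) (Datatypes.S i) = Q ^ (M - i) * qb M i + qb M (Datatypes.S i).
Proof.
  destruct (Compare_dec.lt_eq_lt_dec i M) as [[Hlt|Heq]|Hgt].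
  - destruct (Nat.le_exists_sub (Datatypes.S i) M ltac:(lia)) as [j [Hj _]]. subst M.
    rewrite !qb_in by lia.
    replace (Datatypes.S (j + Datatypes.S i) - Datatypes.S i)%nat with (Datatypes.S j) by lia.
    replace (j + Datatypes.S i - i)%nat with (Datatypes.S j) by lia.
    replace (j + Datatypes.S i - Datatypes.S i)%nat with j by lia.
    rewrite (pQ_S (j + Datatypes.S i)), (pQ_S i), (pQ_S j).
    replace (Q ^ Datatypes.S (j + Datatypes.S i)) with (Q ^ Datatypes.S j * Q ^ Datatypes.S i)
      by (rewrite <- Cpow_add; f_equal; lia).
    pose proof (pQ_ne0 i). pose proof (pQ_ne0 j). pose proof (pQ_ne0 (j + Datatypes.S i)).
    pose proof (HQ (Datatypes.S i) ltac:(lia)). pose proof (HQ (Datatypes.S j) ltac:(lia)).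
    field. auto.
  - subst. rewrite !qb_MM, qb_out by lia. rewrite Nat.sub_diag. simpl. ring.
  - rewrite !qb_out by lia. ring.
Qed.

Lemma PA_sum M f : csum (fun i => qb (Datatypes.S M) i * f i) (Datatypes.S (Datatypes.S M)) =
  csum (fun i => qb M i * (f (Datatypes.S i) + Q ^ i * f i)) (Datatypes.S M).
Proof.
  rewrite csum_shift, qb_0.
  rewrite (csum_ext_lt _ (fun i => qb M i * f (Datatypes.S i) + Q ^ (Datatypes.S i) * qb M (Datatypes.S i) * f (Datatypes.S i)))
    by (intros; rewrite pascalA; ring).
  rewrite csum_plus.
  rewrite (csum_ext_lt (fun i => qb M i * (f (Datatypes.S i) + Q ^ i * f i))
     (fun i => qb M i * f (Datatypes.S i) + Q ^ i * qb M i * f i)) by (intros; ring).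
  rewrite csum_plus.
  set (Y := fun i => Q ^ i * qb M i * f i).
  change (csum (fun i => Q ^ Datatypes.S i * qb M (Datatypes.S i) * f (Datatypes.S i)) (Datatypes.S M))
    with (csum (fun i => Y (Datatypes.S i)) (Datatypes.S M)).
  assert (H : csum Y (Datatypes.S (Datatypes.S M)) = csum Y (Datatypes.S M)).
  { rewrite csum_S. unfold Y at 2. rewrite qb_out by lia. ring. }
  rewrite csum_shift in H. unfold Y at 1 in H. rewrite qb_0 in H.
  replace (Q ^ 0) with (RtoC 1) in H by reflexivity.
  rewrite <- H. ring.
Qed.

Lemma PB_sum M f : csum (fun i => qb (Datatypes.S M) i * f i) (Datatypes.S (Datatypes.S M)) =
  csum (fun i => qb M i * (Q ^ (M - i) * f (Datatypes.S i) + f i)) (Datatypes.S M).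
Proof.
  rewrite csum_shift, qb_0.
  rewrite (csum_ext_lt _ (fun i => Q ^ (M - i) * qb M i * f (Datatypes.S i) + qb M (Datatypes.S i) * f (Datatypes.S i)))
    by (intros; rewrite pascalB; ring).
  rewrite csum_plus.
  rewrite (csum_ext_lt (fun i => qb M i * (Q ^ (M - i) * f (Datatypes.S i) + f i))
     (fun i => Q ^ (M - i) * qb M i * f (Datatypes.S i) + qb M i * f i)) by (intros; ring).
  rewrite csum_plus.
  set (Y := fun i => qb M i * f i).
  change (csum (fun i => qb M (Datatypes.S i) * f (Datatypes.S i)) (Datatypes.S M))
    with (csum (fun i => Y (Datatypes.S i)) (Datatypes.S M)).
  assert (H : csum Y (Datatypes.S (Datatypes.S M)) = csum Y (Datatypes.S M)).
  { rewrite csum_S. unfold Y at 2. rewrite qb_out by lia. ring. }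
  rewrite csum_shift in H. unfold Y at 1 in H. rewrite qb_0 in H.
  rewrite <- H. ring.
Qed.

Lemma PAB_sum N f : csum (fun i => qb (Datatypes.S (Datatypes.S N)) i * f i) (Datatypes.S (Datatypes.S (Datatypes.S N))) =
  csum (fun i => qb N i * (Q ^ (N - i) * f (Datatypes.S (Datatypes.S i)) + (1 + Q ^ (Datatypes.S N)) * f (Datatypes.S i) + Q ^ i * f i)) (Datatypes.S N).
Proof.
  rewrite PA_sum.
  set (g := fun i => f (Datatypes.S i) + Q ^ i * f i).
  change (csum (fun i => qb (Datatypes.S N) i * (f (Datatypes.S i) + Q ^ i * f i)) (Datatypes.S (Datatypes.S N)))
    with (csum (fun i => qb (Datatypes.S N) i * g i) (Datatypes.S (Datatypes.S N))).
  rewrite PB_sum. apply csum_ext_lt. intros i Hi. unfold g.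
  replace (Q ^ Datatypes.S N) with (Q ^ (N - i) * Q ^ Datatypes.S i) by (rewrite <- Cpow_add; f_equal; lia).
  ring.
Qed.

End QB.

Close Scope C_scope.
Open Scope R_scope.
Local Open Scope C_scope.

Definition FP (a b : C) (n : nat) : C :=
  pprod (fun k => (1 + E (b + (2 * nC k - 1) * a)) * (1 + E (- b + (2 * nC k - 1) * a))) n.

Definition tq (a b : C) (n i : nat) : C :=
  E ((nC i - nC n) * (nC i - nC n) * a + (nC i - nC n) * b).

Lemma HQ_ok a : (Re a < 0)%R -> forall k, (1 <= k)%nat -> 1 - E (2 * a) ^ k <> 0.
Proof.
  intros Ha k Hk H.
  assert (E (2 * a) ^ k = 1). { replace (E (2 * a) ^ k) with (1 - (1 - E (2 * a) ^ k)) by ring. rewrite H. ring. }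
  rewrite <- cexp_nat in H0. apply (f_equal Cmod) in H0. rewrite Cmod_cexp, Cmod_1, re_nC, re_2 in H0.
  assert (1 <= INR k)%R by (apply (le_INR 1); auto).
  assert (INR k * (2 * Re a) < 0)%R by nra.
  apply exp_increasing in H2. rewrite exp_0 in H2. lra.
Qed.

Lemma FP_finite a b n : (Re a < 0)%R ->
  FP a b n = csum (fun i => qb (E (2 * a)) (2 * n) i * tq a b n i) (Datatypes.S (2 * n)).
Proof.
  intros Ha. set (Q := E (2 * a)). pose proof (HQ_ok a Ha) as HQ. fold Q in HQ.
  induction n.
  - unfold FP. simpl. rewrite (qb_MM Q HQ 0). unfold tq.
    replace ((nC 0 - nC 0) * (nC 0 - nC 0) * a + (nC 0 - nC 0) * b) with (RtoC 0) by (nCsimpl; ring).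
    rewrite cexp_0. ring.
  - unfold FP in *. rewrite pprod_S, IHn.
    replace (2 * Datatypes.S n)%nat with (Datatypes.S (Datatypes.S (2 * n))) by lia.
    rewrite (PAB_sum Q HQ).
    rewrite <- csum_scal_r. apply csum_ext_lt. intros i Hi.
    set (Xp := E (b + (2 * nC (Datatypes.S n) - 1) * a)).
    set (Xm := E (- b + (2 * nC (Datatypes.S n) - 1) * a)).
    assert (H1 : Q ^ (2 * n - i) * tq a b (Datatypes.S n) (Datatypes.S (Datatypes.S i)) = tq a b n i * Xp).
    { unfold Q, tq, Xp. rewrite <- cexp_nat, <- !cexp_add. f_equal. rewrite nC_sub by lia. nCsimpl. ring. }
    assert (H2 : tq a b (Datatypes.S n) (Datatypes.S i) = tq a b n i).
    { unfold tq. f_equal. nCsimpl. ring. }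
    assert (H3 : Q ^ Datatypes.S (2 * n) * tq a b (Datatypes.S n) (Datatypes.S i) = tq a b n i * Xp * Xm).
    { unfold Q, tq, Xp, Xm. rewrite <- cexp_nat, <- !cexp_add. f_equal. nCsimpl. ring. }
    assert (H4 : Q ^ i * tq a b (Datatypes.S n) i = tq a b n i * Xm).
    { unfold Q, tq, Xm. rewrite <- cexp_nat, <- !cexp_add. f_equal. nCsimpl. ring. }
    replace (qb Q (2 * n) i *
      (Q ^ (2 * n - i) * tq a b (Datatypes.S n) (Datatypes.S (Datatypes.S i)) +
       (1 + Q ^ Datatypes.S (2 * n)) * tq a b (Datatypes.S n) (Datatypes.S i) +
       Q ^ i * tq a b (Datatypes.S n) i))
    with (qb Q (2 * n) i *
      (Q ^ (2 * n - i) * tq a b (Datatypes.S n) (Datatypes.S (Datatypes.S i)) +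
       tq a b (Datatypes.S n) (Datatypes.S i) + Q ^ Datatypes.S (2 * n) * tq a b (Datatypes.S n) (Datatypes.S i) +
       Q ^ i * tq a b (Datatypes.S n) i)) by ring.
    rewrite H1, H2, H4. rewrite H2 in H3. rewrite H3. ring.
Qed.

Close Scope C_scope.
Open Scope R_scope.
Local Open Scope C_scope.

Fixpoint ksum (g : nat -> C) (n : nat) : C :=
  match n with O => 0 | Datatypes.S m => ksum g m + g (Datatypes.S m) end.

Lemma ksum_S g n : ksum g (Datatypes.S n) = ksum g n + g (Datatypes.S n).
Proof. reflexivity. Qed.

Lemma ksum_ext g h n : (forall k, (1 <= k <= n)%nat -> g k = h k) -> ksum g n = ksum h n.
Proof. induction n; intros H; simpl; auto. rewrite IHn by (intros; apply H; lia). rewrite H by lia. auto. Qed.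

Lemma ksum_bound g n : (Cmod (ksum g n) <= rs (fun k => Cmod (g k)) n)%R.
Proof. induction n; simpl. rewrite Cmod_0; lra. eapply Rle_trans. apply Cmod_tri. lra. Qed.

Lemma ksum_split g J m : ksum g (J + m) = ksum g J + ksum (fun k => g (J + k)%nat) m.
Proof. induction m; simpl. rewrite Nat.add_0_r. ring. replace (J + Datatypes.S m)%nat with (Datatypes.S (J + m)) by lia.
  simpl. rewrite IHm. ring. Qed.

Lemma ksum_lin (x y u v : nat -> C) (l : C) n :
  ksum (fun k => x k * u k + y k * v k) n =
  l * ksum (fun k => u k + v k) n + ksum (fun k => (x k - l) * u k) n + ksum (fun k => (y k - l) * v k) n.
Proof. induction n; simpl. ring. rewrite IHn. ring. Qed.

Lemma rs_const c n : rs (fun _ => c) n = (INR n * c)%R.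
Proof. induction n; simpl rs. simpl; ring. rewrite IHn, S_INR. ring. Qed.

Lemma csum_sym F m n : csum (fun i => F (m + i)%nat) (Datatypes.S (2 * n)) =
  F (m + n)%nat + ksum (fun k => F (m + n + k)%nat + F (m + n - k)%nat) n.
Proof.
  revert m. induction n; intros m.
  - simpl. rewrite !Nat.add_0_r. ring.
  - replace (2 * Datatypes.S n)%nat with (Datatypes.S (Datatypes.S (2 * n))) by lia.
    rewrite csum_shift, csum_S.
    rewrite (csum_ext_lt (fun i => F (m + Datatypes.S i)%nat) (fun i => F (Datatypes.S m + i)%nat))
      by (intros; f_equal; lia).
    rewrite IHn. rewrite ksum_S.
    rewrite (ksum_ext (fun k => F (Datatypes.S m + n + k)%nat + F (Datatypes.S m + n - k)%nat)
       (fun k => F (m + Datatypes.S n + k)%nat + F (m + Datatypes.S n - k)%nat)) by (intros; f_equal; f_equal; lia).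
    replace (Datatypes.S m + n)%nat with (m + Datatypes.S n)%nat by lia.
    replace (m + Datatypes.S (Datatypes.S (2 * n)))%nat with (m + Datatypes.S n + Datatypes.S n)%nat by lia.
    replace (m + 0)%nat with (m + Datatypes.S n - Datatypes.S n)%nat by lia.
    ring.
Qed.

Lemma tsum_ksum a b n : tsum a b n = 1 + ksum (fun k => tterm a b k + tterm a (- b) k) n.
Proof. induction n; simpl. ring. rewrite IHn. ring. Qed.

Lemma Cminus_0_r (z : C) : z - 0 = z.
Proof. ring. Qed.

Lemma unif_finite (al : nat -> nat -> C) : (forall k, cv (fun n => al n k) 0) ->
  forall J d, (0 < d)%R -> exists N, forall n k, (N <= n)%nat -> (k <= J)%nat -> (Cmod (al n k) < d)%R.
Proof.
  intros H J d Hd. induction J.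
  - destruct (H 0%nat d Hd) as [N HN]. exists N. intros n k Hn Hk. replace k with 0%nat by lia.
    specialize (HN n Hn). rewrite Cminus_0_r in HN. auto.
  - destruct IHJ as [N1 H1]. destruct (H (Datatypes.S J) d Hd) as [N2 H2].
    exists (N1 + N2)%nat. intros n k Hn Hk. destruct (Nat.eq_dec k (Datatypes.S J)).
    + subst. specialize (H2 n ltac:(lia)). rewrite Cminus_0_r in H2. auto.
    + apply H1; lia.
Qed.

Lemma tannery (al : nat -> nat -> C) (t : nat -> C) (M K r : R) :
  (0 <= M)%R -> (0 <= K)%R -> (0 <= r < 1)%R ->
  (forall n k, (Cmod (al n k) <= M)%R) -> (forall k, cv (fun n => al n k) 0) ->
  (forall k, (Cmod (t k) <= K * r ^ k)%R) ->
  cv (fun n => ksum (fun k => al n k * t k) n) 0.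
Proof.
  intros HM HK Hr Hb Hc Ht eps He.
  destruct (geom_small r (M * K * r / (1 - r))%R Hr (eps / 2)%R ltac:(lra)) as [J HJ].
  specialize (HJ J (le_n J)).
  set (d := (eps / (2 * (INR J * K + 1)))%R).
  assert (HJK : (0 <= INR J * K)%R) by (apply Rmult_le_pos; auto; apply pos_INR).
  assert (Hd : (0 < d)%R) by (unfold d; apply Rdiv_lt_0_compat; lra).
  destruct (unif_finite al Hc J d Hd) as [N1 HN1].
  exists (N1 + J)%nat. intros n Hn. rewrite Cminus_0_r.
  replace n with (J + (n - J))%nat by lia. rewrite ksum_split.
  assert (Hrk : forall k, (r ^ k <= 1)%R) by (intros; rewrite <- (pow1 k); apply pow_incr; lra).
  assert (Hrk0 : forall k, (0 <= r ^ k)%R) by (intros; apply pow_le; lra).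
  assert (A1 : (Cmod (ksum (fun k => (al (J + (n - J))%nat k * t k)%C) J) <= INR J * (d * K))%R).
  { eapply Rle_trans. apply ksum_bound.
    replace (INR J * (d * K))%R with (rs (fun _ => (d * K)%R) J) by apply rs_const.
    apply rs_le. intros k Hk.
    rewrite Cmod_mult. apply Rmult_le_compat. apply Cmod_ge_0. apply Cmod_ge_0.
    left. apply HN1; lia. eapply Rle_trans. apply Ht. specialize (Hrk k). nra. }
  assert (A2 : (Cmod (ksum (fun k => (al (J + (n - J))%nat (J + k)%nat * t (J + k)%nat)%C) (n - J)) <=
      M * K * r ^ (Datatypes.S J) / (1 - r))%R).
  { eapply Rle_trans. apply ksum_bound.
    eapply Rle_trans; [|apply (rs_geom (M * K)); auto; apply Rmult_le_pos; auto].
    apply rs_le. intros k Hk. rewrite Cmod_mult. rewrite Rmult_assoc.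
    apply Rmult_le_compat. apply Cmod_ge_0. apply Cmod_ge_0. apply Hb. apply Ht. }
  assert (A3 : (M * K * r ^ (Datatypes.S J) / (1 - r) = M * K * r / (1 - r) * r ^ J)%R).
  { simpl. field. lra. }
  assert (A4 : (INR J * (d * K) < eps / 2)%R).
  { unfold d. replace (INR J * (eps / (2 * (INR J * K + 1)) * K))%R with
      (eps / 2 * (INR J * K / (INR J * K + 1)))%R by (field; lra).
    assert (INR J * K / (INR J * K + 1) < 1)%R.
    { apply (Rmult_lt_reg_r (INR J * K + 1)). lra. unfold Rdiv.
      rewrite Rmult_assoc, Rinv_l by lra. lra. }
    nra. }
  eapply Rle_lt_trans. apply Cmod_tri. lra.
Qed.

Close Scope C_scope.
Open Scope R_scope.
Local Open Scope C_scope.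

Definition GG (a b : C) : C := eP iota (2 * a) * eP (b - a) (2 * a) * eP (- b - a) (2 * a).

Lemma Cmod_div_le (x y z : C) (B m : R) : (Cmod x <= B)%R -> (0 < m)%R -> (m <= Cmod y)%R -> (m <= Cmod z)%R ->
  (Cmod (x / (y * z)) <= B / (m * m))%R.
Proof.
  intros Hx Hm Hy Hz.
  assert (Hy0 : y <> 0) by (intros H; rewrite H, Cmod_0 in Hy; lra).
  assert (Hz0 : z <> 0) by (intros H; rewrite H, Cmod_0 in Hz; lra).
  rewrite Cmod_div by (apply Cmult_neq_0; auto). rewrite Cmod_mult.
  pose proof (Cmod_ge_0 x).
  unfold Rdiv. apply Rmult_le_compat; auto. left; apply Rinv_0_lt_compat.
  apply Rmult_lt_0_compat; lra. apply Rinv_le_contravar. nra.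
  apply Rmult_le_compat; lra.
Qed.

Lemma csum_sym0 F n : csum F (Datatypes.S (2 * n)) =
  F n + ksum (fun k => F (n + k)%nat + F (n - k)%nat) n.
Proof. exact (csum_sym F 0 n). Qed.

Theorem JTP a b : (Re a < 0)%R -> TH a b = GG a b.
Proof.
  intros Ha.
  set (Q := E (2 * a)). pose proof (HQ_ok a Ha) as HQ. fold Q in HQ.
  assert (Ha2 : (Re (2 * a) < 0)%R) by (rewrite re_2; lra).
  set (L := eP iota (2 * a)).
  assert (HpQ : forall n, pQ Q n = ep iota (2 * a) n).
  { intros n. unfold pQ, ep. apply pprod_ext. intros k _.
    rewrite cexp_add, cexp_iota, cexp_nat. unfold Q. ring. }
  assert (HL : cv (pQ Q) L). { eapply cv_ext. intros n. symmetry. apply HpQ. apply eP_cv; auto. }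
  assert (HL0 : L <> 0). { apply eP_ne0; auto. rewrite re_iota. lra. }
  set (lam := / L).
  destruct (cv_bounded _ _ HL) as [Bu [HBu HBub]].
  destruct (cv_bounded_below _ _ HL HL0 (pQ_ne0 Q HQ)) as [Bl [HBl HBlb]].
  assert (Hqb : forall N i, (Cmod (qb Q N i) <= Bu / (Bl * Bl))%R).
  { intros N i. destruct (Compare_dec.le_lt_dec i N).
    - rewrite qb_in by auto. apply Cmod_div_le; auto.
    - rewrite qb_out by auto. rewrite Cmod_0. apply Rdiv_le_0_compat; nra. }
  set (Mq := (Bu / (Bl * Bl) + Cmod lam)%R).
  assert (HMq : (0 <= Mq)%R) by (unfold Mq; pose proof (Cmod_ge_0 lam); pose proof (Hqb 0%nat 0%nat); pose proof (Cmod_ge_0 (qb Q 0 0)); lra).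
  assert (Hal : forall N i, (Cmod (qb Q N i - lam) <= Mq)%R).
  { intros N i. eapply Rle_trans. apply Cmod_tri. rewrite Cmod_opp. unfold Mq. pose proof (Hqb N i). lra. }
  assert (Hlim : L / (L * L) = lam) by (unfold lam; field; auto).
  assert (Hp1 : forall k, cv (fun n => qb Q (2 * n) (n + k) - lam) 0).
  { intros k. replace (RtoC 0) with (lam - lam) by ring. apply cv_minus; [|apply cv_const].
    apply (cv_ev (fun n => pQ Q (2 * n) / (pQ Q (n + k) * pQ Q (n - k)))).
    - exists k. intros n Hn. rewrite qb_in by lia. do 3 f_equal. lia.
    - rewrite <- Hlim. apply cv_div; auto. apply (cv_sub_ge (pQ Q)). intros; lia. auto.
      apply cv_mult. apply cv_shift; auto. apply cv_shift_back; auto.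
      apply Cmult_neq_0; auto. }
  assert (Hp2 : forall k, cv (fun n => qb Q (2 * n) (n - k) - lam) 0).
  { intros k. replace (RtoC 0) with (lam - lam) by ring. apply cv_minus; [|apply cv_const].
    apply (cv_ev (fun n => pQ Q (2 * n) / (pQ Q (n - k) * pQ Q (n + k)))).
    - exists k. intros n Hn. rewrite qb_in by lia. do 3 f_equal. lia.
    - rewrite <- Hlim. apply cv_div; auto. apply (cv_sub_ge (pQ Q)). intros; lia. auto.
      apply cv_mult. apply cv_shift_back; auto. apply cv_shift; auto.
      apply Cmult_neq_0; auto. }
  assert (HFP : forall n, FP a b n = lam * tsum a b n +
     ((qb Q (2 * n) n - lam) + ksum (fun k => (qb Q (2 * n) (n + k) - lam) * tterm a b k) n
        + ksum (fun k => (qb Q (2 * n) (n - k) - lam) * tterm a (- b) k) n)).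
  { intros n. rewrite FP_finite by auto. fold Q.
    rewrite (csum_sym0 (fun j => qb Q (2 * n) j * tq a b n j)). cbv beta.
    rewrite (ksum_ext _ (fun k => qb Q (2 * n) (n + k) * tterm a b k + qb Q (2 * n) (n - k) * tterm a (- b) k)).
    2: { intros k Hk. unfold tq, tterm. f_equal; f_equal; f_equal.
         - rewrite nC_add. ring. - rewrite nC_sub by lia. ring. }
    rewrite (ksum_lin _ _ _ _ lam). rewrite tsum_ksum.
    unfold tq. replace ((nC n - nC n) * (nC n - nC n) * a + (nC n - nC n) * b) with (RtoC 0) by ring.
    rewrite cexp_0. ring. }
  assert (HFPcv : cv (FP a b) (lam * TH a b)).
  { eapply cv_ext. intros n. symmetry. apply HFP.
    replace (lam * TH a b) with (lam * TH a b + ((0 + 0) + 0)) by ring.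
    apply cv_plus. apply cv_scal. apply S_cv; auto.
    apply cv_plus. apply cv_plus.
    - eapply cv_ext; [|apply (Hp1 0%nat)]. intros n. simpl. rewrite Nat.add_0_r. auto.
    - apply (tannery (fun n k => qb Q (2 * n) (n + k) - lam) (tterm a b) Mq (exp ((Re b - Re a) ^ 2 / (- 4 * Re a))) (exp (Re a))); auto.
      left; apply exp_pos. split. left; apply exp_pos. rewrite <- exp_0. apply exp_increasing; auto.
      apply tt_bound; auto.
    - apply (tannery (fun n k => qb Q (2 * n) (n - k) - lam) (tterm a (- b)) Mq (exp ((Re (- b) - Re a) ^ 2 / (- 4 * Re a))) (exp (Re a))); auto.
      left; apply exp_pos. split. left; apply exp_pos. rewrite <- exp_0. apply exp_increasing; auto.
      apply tt_bound; auto. }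
  assert (HG : forall n, ep iota (2 * a) n * ep (b - a) (2 * a) n * ep (- b - a) (2 * a) n = pQ Q n * FP a b n).
  { intros n. rewrite HpQ. rewrite Cmult_assoc_r || idtac. unfold FP, ep.
    rewrite <- Cmult_assoc. f_equal. rewrite <- pprod_mult. apply pprod_ext. intros k _.
    f_equal; f_equal; f_equal; ring. }
  apply (cv_unique (fun n => pQ Q n * FP a b n)).
  - replace (TH a b) with (L * (lam * TH a b)) by (unfold lam; field; auto).
    apply cv_mult; auto.
  - eapply cv_ext. intros n. apply HG. unfold GG. apply cv_mult. apply cv_mult.
    all: apply eP_cv; auto.
Qed.

Close Scope C_scope.
Open Scope R_scope.
Local Open Scope C_scope.

Definition hi : C := (0%R, (PI / 2)%R).
Lemma iota_hi : iota = 2 * hi.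
Proof. unfold iota, hi. apply injective_projections; simpl; field. Qed.
Lemma re_hi : Re hi = 0%R.
Proof. reflexivity. Qed.

Lemma E_congr x y (m : Z) : x = y + IZR m * (2 * iota) -> E x = E y.
Proof.
  intros ->. destruct m as [|p|p].
  - f_equal. simpl. ring.
  - replace (RtoC (IZR (Zpos p))) with (nC (Pos.to_nat p)).
    apply cexp_per. unfold nC. rewrite INR_IZR_INZ, positive_nat_Z. auto.
  - replace (RtoC (IZR (Zneg p))) with (- nC (Pos.to_nat p)).
    replace (y + - nC (Pos.to_nat p) * (2 * iota)) with (y - nC (Pos.to_nat p) * (2 * iota)) by ring.
    apply cexp_per'. unfold nC. rewrite INR_IZR_INZ, positive_nat_Z.
    replace (IZR (Z.neg p)) with (- IZR (Z.pos p))%R by reflexivity. rewrite RtoC_opp. auto.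
Qed.

Ltac ec m := apply (E_congr _ _ m); rewrite ?iota_hi; ring.

Lemma Cre_neg_lt x : (Re x < 0)%R -> (Re (- x) > 0)%R.
Proof. rewrite re_opp. lra. Qed.

Lemma eP_eq c d c' d' : c = c' -> d = d' -> eP c d = eP c' d'.
Proof. intros -> ->; auto. Qed.

Lemma GG_cong a b a' b' : E a = E a' -> E b = E b' -> GG a b = GG a' b'.
Proof.
  intros Ha Hb. unfold GG.
  assert (H2 : E (2 * a) = E (2 * a')).
  { replace (2 * a) with (a + a) by ring. replace (2 * a') with (a' + a') by ring.
    rewrite !cexp_add, Ha. auto. }
  assert (H3 : E (b - a) = E (b' - a')).
  { replace (b - a) with (b + - a) by ring. replace (b' - a') with (b' + - a') by ring.
    rewrite !cexp_add, !cexp_opp, Ha, Hb. auto. }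
  assert (H4 : E (- b - a) = E (- b' - a')).
  { replace (- b - a) with (- b + - a) by ring. replace (- b' - a') with (- b' + - a') by ring.
    rewrite !cexp_add, !cexp_opp, Ha, Hb. auto. }
  rewrite (e_cong iota (2 * a) iota (2 * a')), (e_cong (b - a) (2 * a) (b' - a') (2 * a')),
    (e_cong (- b - a) (2 * a) (- b' - a') (2 * a')); auto.
Qed.

Lemma TH_c a b a' b' : E a = E a' -> E b = E b' -> TH a b = TH a' b'.
Proof. apply S_cong. Qed.

Lemma TH_cm a b a' b' : E a = E a' -> E b = E (- b') -> TH a b = TH a' b'.
Proof. intros. rewrite <- (S_sym a' b'). apply S_cong; auto. Qed.

Lemma Cmult_reg_l (x y z : C) : x <> 0 -> x * y = x * z -> y = z.
Proof. intros Hx H. replace y with (/ x * (x * y)) by (field; auto). rewrite H. field; auto. Qed.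

Lemma GG_b0 B : GG B 0 = eP iota (2 * B) * eP (- B) (2 * B) * eP (- B) (2 * B).
Proof. unfold GG. f_equal. f_equal. apply eP_eq; ring. apply eP_eq; ring. Qed.

Lemma GG_bb B : (Re B < 0)%R -> GG B B = 2 * eP iota (2 * B) * eP 0 (2 * B) * eP 0 (2 * B).
Proof.
  intros HB. unfold GG.
  assert (Hd : (Re (2 * B) < 0)%R) by (rewrite re_2; lra).
  rewrite (e_shift (- B - B) (2 * B) Hd).
  replace (- B - B + 2 * B) with (RtoC 0) by ring. rewrite cexp_0.
  replace (B - B) with (RtoC 0) by ring. ring.
Qed.


Ltac ecany := first [ec 0%Z | ec 1%Z | ec (-1)%Z | ec 2%Z | ec (-2)%Z | ec 3%Z | ec (-3)%Z | ec 4%Z | ec (-4)%Z | ec 5%Z | ec (-5)%Z].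

Close Scope C_scope.
Open Scope R_scope.
Local Open Scope C_scope.

Lemma re_lin_ok (U : C) (k : R) : (Re U < 0)%R -> (0 < k)%R -> (Re (RtoC k * U) < 0)%R.
Proof. intros. rewrite re_RC. nra. Qed.

Lemma re_hi_plus U : Re (U + hi) = Re U.
Proof. rewrite re_plus, re_hi. ring. Qed.

Lemma theta_a1 U : (Re U < 0)%R ->
  GG (2 * U) 0 * GG (2 * U) 0 = GG (4 * U) 0 * GG (4 * U) 0 + E (2 * U) * (GG (4 * U) (4 * U) * GG (4 * U) (4 * U)).
Proof.
  intros HU.
  set (al := U + hi). set (al' := U + hi + iota).
  assert (Hal : (Re al < 0)%R) by (unfold al; rewrite re_hi_plus; auto).
  assert (Hal' : (Re al' < 0)%R) by (unfold al'; rewrite re_plus, re_hi_plus, re_iota; lra).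
  assert (H4U : (Re (4 * U) < 0)%R) by (apply re_lin_ok; auto; lra).
  assert (Hd1 := TH_D1 al 0 Hal). assert (Hd2 := TH_D1 al' 0 Hal').
  rewrite (TH_c (4 * al) (2 * 0) (4 * U) 0) in Hd1 by (unfold al; ecany).
  rewrite (TH_c (4 * al) (4 * al + 2 * 0) (4 * U) (4 * U)) in Hd1 by (unfold al; ecany).
  rewrite (TH_c (4 * al') (2 * 0) (4 * U) 0) in Hd2 by (unfold al'; ecany).
  rewrite (TH_c (4 * al') (4 * al' + 2 * 0) (4 * U) (4 * U)) in Hd2 by (unfold al'; ecany).
  rewrite !JTP in Hd1, Hd2 by auto.
  replace (al' + 0) with (al + iota) in Hd2 by (unfold al, al'; ring).
  rewrite cexp_plus_iota in Hd2. replace (al + 0) with al in Hd1 by ring.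
  assert (M1 : GG al 0 * GG al' 0 = GG (2 * U) 0 * GG (2 * U) 0).
  { rewrite !GG_b0.
    assert (Hd : (Re (2 * al) < 0)%R) by (rewrite re_2; lra).
    rewrite (e_cong iota (2 * al') iota (2 * al)) by (auto || (unfold al, al'; ecany)).
    rewrite (e_cong (- al') (2 * al') (- al + iota) (2 * al)) by (unfold al, al'; ecany).
    assert (P := e_pair (- al) (2 * al) Hd).
    rewrite (e_cong (2 * - al + iota) (2 * (2 * al)) (- (2 * U)) (2 * (2 * U))) in P
      by (unfold al; ecany).
    assert (Sp := e_split iota (2 * al) Hd).
    rewrite (e_cong (iota - 2 * al) (2 * (2 * al)) (- (2 * U)) (2 * (2 * U))) in Sp by (unfold al; ecany).
    rewrite (e_cong iota (2 * (2 * al)) iota (2 * (2 * U))) in Sp by (unfold al; ecany).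
    rewrite Sp.
    transitivity ((eP (- (2 * U)) (2 * (2 * U)) * eP iota (2 * (2 * U))) * (eP (- (2 * U)) (2 * (2 * U)) * eP iota (2 * (2 * U))) *
       ((eP (- al) (2 * al) * eP (- al + iota) (2 * al)) * (eP (- al) (2 * al) * eP (- al + iota) (2 * al)))).
    ring. rewrite P. ring. }
  assert (Ea : E al * E al = - E (2 * U)).
  { rewrite <- cexp_add. replace (al + al) with (2 * U + iota) by (unfold al; rewrite iota_hi; ring).
    apply cexp_plus_iota. }
  rewrite <- M1, Hd1, Hd2.
  transitivity (GG (4 * U) 0 * GG (4 * U) 0 - (E al * E al) * (GG (4 * U) (4 * U) * GG (4 * U) (4 * U))).
  ring. rewrite Ea. ring.
Qed.

Lemma theta_a2 A : (Re A < 0)%R ->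
  GG A A * GG A A = 2 * GG (2 * A) 0 * GG (2 * A) (2 * A).
Proof.
  intros HA.
  assert (H2 : (Re (2 * A) < 0)%R) by (rewrite re_2; lra).
  assert (H4 : (Re (2 * (2 * A)) < 0)%R) by (rewrite !re_2; lra).
  rewrite (GG_bb A HA), (GG_bb (2 * A) H2), GG_b0.
  assert (P := e_pair 0 (2 * A) H2).
  rewrite (eP_eq (0 + iota) (2 * A) iota (2 * A)) in P by ring.
  rewrite (eP_eq (2 * 0 + iota) (2 * (2 * A)) iota (2 * (2 * A))) in P by ring.
  assert (Sp := e_split 0 (2 * A) H2).
  rewrite (eP_eq (0 - 2 * A) (2 * (2 * A)) (- (2 * A)) (2 * (2 * A))) in Sp by ring.
  rewrite <- P. rewrite Sp. ring.
Qed.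

Definition Pu (A : C) : C := eP 0 (2 * A) / eP (- A) (2 * A).

Lemma eP_mA_ne0 A : (Re A < 0)%R -> eP (- A) (2 * A) <> 0.
Proof. intros HA. apply eP_ne0. rewrite re_2; lra. rewrite re_opp, re_2. lra. Qed.

Lemma theta_a3 A : (Re A < 0)%R -> 2 * (Pu A * Pu A) * GG A 0 = GG A A.
Proof.
  intros HA. rewrite GG_bb, GG_b0 by auto. unfold Pu.
  pose proof (eP_mA_ne0 A HA). field. auto.
Qed.

Lemma GG_b0_ne0 A : (Re A < 0)%R -> GG A 0 <> 0.
Proof.
  intros HA. rewrite GG_b0. pose proof (eP_mA_ne0 A HA).
  assert (eP iota (2 * A) <> 0). { apply eP_ne0. rewrite re_2; lra. rewrite re_iota, re_2. lra. }
  repeat apply Cmult_neq_0; auto.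
Qed.

Lemma part_a_core U : (Re U < 0)%R ->
  Pu (2 * U) * Pu (2 * U) * (Pu (2 * U) * Pu (2 * U)) * (1 + 4 * E (2 * U) * (Pu (4 * U) * Pu (4 * U)) * (Pu (4 * U) * Pu (4 * U)))
  = Pu (4 * U) * Pu (4 * U).
Proof.
  intros HU.
  assert (H2 : (Re (2 * U) < 0)%R) by (rewrite re_2; lra).
  assert (H4 : (Re (4 * U) < 0)%R) by (apply re_lin_ok; auto; lra).
  pose proof (theta_a1 U HU) as T1.
  pose proof (theta_a2 (2 * U) H2) as T2.
  pose proof (theta_a3 (2 * U) H2) as T3.
  pose proof (theta_a3 (4 * U) H4) as T4.
  replace (2 * (2 * U)) with (4 * U) in T2 by ring.
  pose proof (GG_b0_ne0 _ H2) as N1. pose proof (GG_b0_ne0 _ H4) as N2.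
  set (a0 := GG (2 * U) 0) in *. set (b0 := GG (2 * U) (2 * U)) in *.
  set (c0 := GG (4 * U) 0) in *. set (d0 := GG (4 * U) (4 * U)) in *.
  set (p1 := Pu (2 * U) * Pu (2 * U)) in *. set (p2 := Pu (4 * U) * Pu (4 * U)) in *.
  assert (Hp1 : p1 = b0 / (2 * a0)) by (rewrite <- T3; field; auto).
  assert (Hp2 : p2 = d0 / (2 * c0)) by (rewrite <- T4; field; auto).
  rewrite Hp1, Hp2.
  replace (b0 / (2 * a0) * (b0 / (2 * a0))) with ((b0 * b0) / (4 * (a0 * a0))) by (field; auto).
  rewrite T2.
  replace (1 + 4 * E (2 * U) * (d0 / (2 * c0)) * (d0 / (2 * c0))) with ((c0 * c0 + E (2 * U) * (d0 * d0)) / (c0 * c0))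
    by (field; auto).
  rewrite <- T1. field. auto.
Qed.

Close Scope C_scope.
Open Scope R_scope.
Local Open Scope C_scope.

Definition F1 T := GG (8 * T) (iota - 6 * T).
Definition F3 T := GG (8 * T) (iota - 2 * T).
Definition V T := eP (iota - 14 * T) (16 * T) * eP (iota - 2 * T) (16 * T) /
                  (eP (iota - 10 * T) (16 * T) * eP (iota - 6 * T) (16 * T)).

Lemma reT k T : (Re T < 0)%R -> (0 < k)%R -> (Re (RtoC k * T) < 0)%R.
Proof. apply re_lin_ok. Qed.

Lemma ne0_gen c d : (Re d < 0)%R -> (Re c + Re d < 0)%R -> eP c d <> 0.
Proof. apply eP_ne0. Qed.

Ltac reT := repeat (rewrite ?re_plus, ?re_minus, ?re_opp, ?re_iota, ?re_hi, ?re_RC, ?re_R); try nra.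

Lemma F1_form T : F1 T = eP iota (16 * T) * eP (iota - 14 * T) (16 * T) * eP (iota - 2 * T) (16 * T).
Proof.
  unfold F1, GG. rewrite (eP_eq iota (2 * (8 * T)) iota (16 * T)) by ring.
  rewrite (eP_eq (iota - 6 * T - 8 * T) (2 * (8 * T)) (iota - 14 * T) (16 * T)) by ring.
  rewrite (e_cong (- (iota - 6 * T) - 8 * T) (2 * (8 * T)) (iota - 2 * T) (16 * T)) by ecany. auto.
Qed.

Lemma F3_form T : F3 T = eP iota (16 * T) * eP (iota - 10 * T) (16 * T) * eP (iota - 6 * T) (16 * T).
Proof.
  unfold F3, GG. rewrite (eP_eq iota (2 * (8 * T)) iota (16 * T)) by ring.
  rewrite (eP_eq (iota - 2 * T - 8 * T) (2 * (8 * T)) (iota - 10 * T) (16 * T)) by ring.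
  rewrite (e_cong (- (iota - 2 * T) - 8 * T) (2 * (8 * T)) (iota - 6 * T) (16 * T)) by ecany. auto.
Qed.

Lemma F3_ne0 T : (Re T < 0)%R -> F3 T <> 0.
Proof.
  intros HT. rewrite F3_form.
  repeat apply Cmult_neq_0; apply ne0_gen; reT.
Qed.

Lemma V_ne0 T : (Re T < 0)%R -> V T <> 0.
Proof.
  intros HT. unfold V. apply Cmult_neq_0. apply Cmult_neq_0; apply ne0_gen; reT.
  apply Cinv_neq_0 || (intros H; apply (f_equal (Cmult (eP (iota - 10 * T) (16 * T) * eP (iota - 6 * T) (16 * T)))) in H;
    rewrite Cinv_r, Cmult_0_r in H; [injection H; lra|]).
  apply Cmult_neq_0; apply ne0_gen; reT.
Qed.

Lemma VF T : (Re T < 0)%R -> V T * F3 T = F1 T.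
Proof.
  intros HT. rewrite F1_form, F3_form. unfold V.
  assert (eP (iota - 10 * T) (16 * T) <> 0) by (apply ne0_gen; reT).
  assert (eP (iota - 6 * T) (16 * T) <> 0) by (apply ne0_gen; reT).
  field. auto.
Qed.

Lemma re_ok2 T : (Re T < 0)%R -> (Re (2 * T + iota) < 0)%R.
Proof. intros. reT. Qed.

Lemma DI T : (Re T < 0)%R ->
  GG (2 * T + iota) (T + hi) = F3 T + E (T + hi) * F1 T /\
  GG (2 * T + iota) (T + hi + iota) = F3 T - E (T + hi) * F1 T.
Proof.
  intros HT. assert (Ha : (Re (2 * T + iota) < 0)%R) by reT.
  assert (H8 : (Re (8 * T) < 0)%R) by reT.
  split.
  - rewrite <- JTP by auto. rewrite TH_D2 by auto.
    rewrite (TH_cm (4 * (2 * T + iota)) (2 * (T + hi)) (8 * T) (iota - 2 * T)) by ecany.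
    rewrite (TH_c (4 * (2 * T + iota)) (2 * (T + hi) - 4 * (2 * T + iota)) (8 * T) (iota - 6 * T)) by ecany.
    unfold F1, F3. rewrite !JTP by auto. f_equal. f_equal. f_equal. rewrite iota_hi. ring.
  - rewrite <- JTP by auto. rewrite TH_D2 by auto.
    rewrite (TH_cm (4 * (2 * T + iota)) (2 * (T + hi + iota)) (8 * T) (iota - 2 * T)) by ecany.
    rewrite (TH_c (4 * (2 * T + iota)) (2 * (T + hi + iota) - 4 * (2 * T + iota)) (8 * T) (iota - 6 * T)) by ecany.
    unfold F1, F3. rewrite !JTP by auto.
    replace (E (2 * T + iota - (T + hi + iota))) with (- E (T + hi)).
    ring. rewrite <- cexp_plus_iota. ecany.
Qed.

Lemma DII T : (Re T < 0)%R ->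
  GG (2 * T + hi) (T + hi) = F3 T + E T * F1 T /\
  GG (2 * T + hi) (T + hi + iota) = F3 T - E T * F1 T.
Proof.
  intros HT. assert (Ha : (Re (2 * T + hi) < 0)%R) by reT.
  assert (H8 : (Re (8 * T) < 0)%R) by reT.
  split.
  - rewrite <- JTP by auto. rewrite TH_D2 by auto.
    rewrite (TH_cm (4 * (2 * T + hi)) (2 * (T + hi)) (8 * T) (iota - 2 * T)) by ecany.
    rewrite (TH_c (4 * (2 * T + hi)) (2 * (T + hi) - 4 * (2 * T + hi)) (8 * T) (iota - 6 * T)) by ecany.
    unfold F1, F3. rewrite !JTP by auto. f_equal. f_equal. f_equal. ring.
  - rewrite <- JTP by auto. rewrite TH_D2 by auto.
    rewrite (TH_cm (4 * (2 * T + hi)) (2 * (T + hi + iota)) (8 * T) (iota - 2 * T)) by ecany.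
    rewrite (TH_c (4 * (2 * T + hi)) (2 * (T + hi + iota) - 4 * (2 * T + hi)) (8 * T) (iota - 6 * T)) by ecany.
    unfold F1, F3. rewrite !JTP by auto.
    replace (E (2 * T + hi - (T + hi + iota))) with (- E T).
    ring. rewrite <- cexp_plus_iota. ecany.
Qed.

Lemma Dprime T : (Re T < 0)%R -> GG (2 * T) 0 = GG (8 * T) 0 + E (2 * T) * GG (8 * T) (8 * T).
Proof.
  intros HT. assert (H2 : (Re (2 * T) < 0)%R) by reT. assert (H8 : (Re (8 * T) < 0)%R) by reT.
  rewrite <- !JTP by auto. rewrite TH_D1 by auto.
  rewrite (TH_c (4 * (2 * T)) (2 * 0) (8 * T) 0) by ecany.
  rewrite (TH_c (4 * (2 * T)) (4 * (2 * T) + 2 * 0) (8 * T) (8 * T)) by ecany.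
  replace (2 * T + 0) with (2 * T) by ring. auto.
Qed.

Lemma F1F3_form T : (Re T < 0)%R ->
  F1 T * F3 T = eP iota (16 * T) * eP iota (16 * T) * eP (iota - 2 * T) (4 * T).
Proof.
  intros HT. rewrite F1_form, F3_form.
  assert (S1 := e_split (iota - 2 * T) (4 * T) ltac:(reT)).
  rewrite (eP_eq (iota - 2 * T - 4 * T) (2 * (4 * T)) (iota - 6 * T) (8 * T)) in S1 by ring.
  rewrite (eP_eq (iota - 2 * T) (2 * (4 * T)) (iota - 2 * T) (8 * T)) in S1 by ring.
  assert (S2 := e_split (iota - 6 * T) (8 * T) ltac:(reT)).
  rewrite (eP_eq (iota - 6 * T - 8 * T) (2 * (8 * T)) (iota - 14 * T) (16 * T)) in S2 by ring.
  rewrite (eP_eq (iota - 6 * T) (2 * (8 * T)) (iota - 6 * T) (16 * T)) in S2 by ring.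
  assert (S3 := e_split (iota - 2 * T) (8 * T) ltac:(reT)).
  rewrite (eP_eq (iota - 2 * T - 8 * T) (2 * (8 * T)) (iota - 10 * T) (16 * T)) in S3 by ring.
  rewrite (eP_eq (iota - 2 * T) (2 * (8 * T)) (iota - 2 * T) (16 * T)) in S3 by ring.
  rewrite S1, S2, S3. ring.
Qed.

Lemma R1id T : (Re T < 0)%R -> eP iota (16 * T) = eP 0 (8 * T) * eP iota (8 * T).
Proof.
  intros HT. assert (P := e_pair 0 (8 * T) ltac:(reT)).
  rewrite (eP_eq (0 + iota) (8 * T) iota (8 * T)) in P by ring.
  rewrite (eP_eq (2 * 0 + iota) (2 * (8 * T)) iota (16 * T)) in P by ring. auto.
Qed.

Lemma GG44 T : (Re T < 0)%R -> GG (4 * T) (4 * T) = 2 * eP iota (8 * T) * eP 0 (8 * T) * eP 0 (8 * T).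
Proof. intros HT. rewrite GG_bb by reT. rewrite (eP_eq iota (2 * (4 * T)) iota (8 * T)) by ring.
  rewrite (eP_eq 0 (2 * (4 * T)) 0 (8 * T)) by ring. auto. Qed.

Lemma PIid T : (Re T < 0)%R ->
  GG (2 * T + iota) (T + hi) * GG (2 * T + iota) (T + hi + iota) * GG (4 * T) (4 * T) =
  2 * (F1 T * F3 T) * GG (2 * T) 0.
Proof.
  intros HT. rewrite F1F3_form, GG44 by auto. rewrite (R1id T HT).
  unfold GG at 1 2.
  rewrite (e_cong iota (2 * (2 * T + iota)) iota (4 * T)) by ecany.
  rewrite (e_cong (T + hi - (2 * T + iota)) (2 * (2 * T + iota)) (- T - hi) (4 * T)) by ecany.
  rewrite (e_cong (- (T + hi) - (2 * T + iota)) (2 * (2 * T + iota)) (- 3 * T - 3 * hi) (4 * T)) by ecany.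
  rewrite (e_cong (T + hi + iota - (2 * T + iota)) (2 * (2 * T + iota)) (- T - hi + iota) (4 * T)) by ecany.
  rewrite (e_cong (- (T + hi + iota) - (2 * T + iota)) (2 * (2 * T + iota)) (- 3 * T - 3 * hi + iota) (4 * T)) by ecany.
  assert (P1 := e_pair (- T - hi) (4 * T) ltac:(reT)).
  rewrite (e_cong (2 * (- T - hi) + iota) (2 * (4 * T)) (- 2 * T) (8 * T)) in P1 by ecany.
  assert (P2 := e_pair (- 3 * T - 3 * hi) (4 * T) ltac:(reT)).
  rewrite (e_cong (2 * (- 3 * T - 3 * hi) + iota) (2 * (4 * T)) (- 6 * T) (8 * T)) in P2 by ecany.
  assert (Sp := e_split (- 2 * T) (4 * T) ltac:(reT)).
  rewrite (eP_eq (- 2 * T - 4 * T) (2 * (4 * T)) (- 6 * T) (8 * T)) in Sp by ring.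
  rewrite (eP_eq (- 2 * T) (2 * (4 * T)) (- 2 * T) (8 * T)) in Sp by ring.
  transitivity (eP iota (4 * T) * eP iota (4 * T) *
     ((eP (- 3 * T - 3 * hi) (4 * T) * eP (- 3 * T - 3 * hi + iota) (4 * T)) *
      (eP (- T - hi) (4 * T) * eP (- T - hi + iota) (4 * T))) * GG (4 * T) (4 * T)).
  { rewrite GG44 by auto. ring. }
  rewrite P1, P2, <- Sp. rewrite GG44 by auto.
  rewrite GG_b0. rewrite (eP_eq iota (2 * (2 * T)) iota (4 * T)) by ring.
  rewrite (eP_eq (- (2 * T)) (2 * (2 * T)) (- 2 * T) (4 * T)) by ring.
  assert (R2 := e_split iota (4 * T) ltac:(reT)).
  rewrite (eP_eq (iota - 4 * T) (2 * (4 * T)) (iota - 4 * T) (8 * T)) in R2 by ring.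
  rewrite (eP_eq iota (2 * (4 * T)) iota (8 * T)) in R2 by ring.
  assert (R3 := e_pair (- 2 * T) (4 * T) ltac:(reT)).
  rewrite (eP_eq (- 2 * T + iota) (4 * T) (iota - 2 * T) (4 * T)) in R3 by ring.
  rewrite (eP_eq (2 * (- 2 * T) + iota) (2 * (4 * T)) (iota - 4 * T) (8 * T)) in R3 by ring.
  rewrite R2, <- R3. ring.
Qed.

Lemma PIIid T : (Re T < 0)%R ->
  GG (2 * T + hi) (T + hi) * GG (2 * T + hi) (T + hi + iota) * GG (4 * T) (4 * T) =
  2 * (F1 T * F3 T) * GG (4 * T) 0.
Proof.
  intros HT. rewrite F1F3_form, GG44 by auto. rewrite (R1id T HT).
  set (d0 := 4 * T + iota).
  assert (Hd0 : (Re d0 < 0)%R) by (unfold d0; reT).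
  unfold GG at 1 2.
  rewrite (eP_eq iota (2 * (2 * T + hi)) iota d0) by (unfold d0; rewrite ?iota_hi; ring).
  rewrite (eP_eq (T + hi - (2 * T + hi)) (2 * (2 * T + hi)) (- T) d0) by (unfold d0; rewrite ?iota_hi; ring).
  rewrite (eP_eq (- (T + hi) - (2 * T + hi)) (2 * (2 * T + hi)) (- 3 * T - 2 * iota + iota) d0) by (unfold d0; rewrite ?iota_hi; ring).
  rewrite (eP_eq (T + hi + iota - (2 * T + hi)) (2 * (2 * T + hi)) (- T + iota) d0) by (unfold d0; rewrite ?iota_hi; ring).
  rewrite (eP_eq (- (T + hi + iota) - (2 * T + hi)) (2 * (2 * T + hi)) (- 3 * T - 2 * iota) d0) by (unfold d0; rewrite ?iota_hi; ring).
  assert (P1 := e_pair (- T) d0 Hd0).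
  rewrite (e_cong (2 * - T + iota) (2 * d0) (iota - 2 * T) (8 * T)) in P1 by (unfold d0; ecany).
  assert (P2 := e_pair (- 3 * T - 2 * iota) d0 Hd0).
  rewrite (e_cong (2 * (- 3 * T - 2 * iota) + iota) (2 * d0) (iota - 6 * T) (8 * T)) in P2 by (unfold d0; ecany).
  assert (Sp := e_split (iota - 2 * T) (4 * T) ltac:(reT)).
  rewrite (eP_eq (iota - 2 * T - 4 * T) (2 * (4 * T)) (iota - 6 * T) (8 * T)) in Sp by ring.
  rewrite (eP_eq (iota - 2 * T) (2 * (4 * T)) (iota - 2 * T) (8 * T)) in Sp by ring.
  assert (Si := e_split iota d0 Hd0).
  rewrite (e_cong (iota - d0) (2 * d0) (- 4 * T) (8 * T)) in Si by (unfold d0; ecany).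
  rewrite (e_cong iota (2 * d0) iota (8 * T)) in Si by (unfold d0; ecany).
  transitivity (eP iota d0 * eP iota d0 *
     ((eP (- 3 * T - 2 * iota) d0 * eP (- 3 * T - 2 * iota + iota) d0) *
      (eP (- T) d0 * eP (- T + iota) d0)) * GG (4 * T) (4 * T)).
  { rewrite GG44 by auto. ring. }
  rewrite P1, P2, <- Sp, Si. rewrite GG44 by auto.
  rewrite GG_b0. rewrite (eP_eq iota (2 * (4 * T)) iota (8 * T)) by ring.
  rewrite (eP_eq (- (4 * T)) (2 * (4 * T)) (- 4 * T) (8 * T)) by ring.
  ring.
Qed.

Lemma GG_bb_ne0 B : (Re B < 0)%R -> GG B B <> 0.
Proof.
  intros HB. rewrite GG_bb by auto.
  assert (eP iota (2 * B) <> 0) by (apply ne0_gen; reT).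
  assert (eP 0 (2 * B) <> 0) by (apply ne0_gen; reT).
  repeat apply Cmult_neq_0; auto. intros Hz; injection Hz; lra.
Qed.

Lemma theta_I T : (Re T < 0)%R ->
  (1 + (E T * V T) * (E T * V T)) * E T * GG (4 * T) (4 * T) = 2 * (E T * V T) * GG (2 * T) 0.
Proof.
  intros HT. pose proof (F3_ne0 T HT) as N3.
  assert (HV : V T = F1 T / F3 T) by (rewrite <- (VF T HT); field; auto).
  destruct (DI T HT) as [D1 D2]. pose proof (PIid T HT) as P.
  rewrite D1, D2 in P.
  assert (Eb : E (T + hi) * E (T + hi) = - (E T * E T)).
  { rewrite <- !cexp_add. replace (T + hi + (T + hi)) with (T + T + iota) by (rewrite iota_hi; ring).
    apply cexp_plus_iota. }
  assert (K : (F3 T * F3 T + (E T * E T) * (F1 T * F1 T)) * GG (4 * T) (4 * T) = 2 * (F1 T * F3 T) * GG (2 * T) 0).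
  { rewrite <- P. transitivity ((F3 T * F3 T - (E (T + hi) * E (T + hi)) * (F1 T * F1 T)) * GG (4 * T) (4 * T)).
    rewrite Eb. ring. ring. }
  rewrite HV.
  transitivity (E T / (F3 T * F3 T) * ((F3 T * F3 T + (E T * E T) * (F1 T * F1 T)) * GG (4 * T) (4 * T))).
  field. auto. rewrite K. field. auto.
Qed.

Lemma theta_II T : (Re T < 0)%R ->
  (1 - (E T * V T) * (E T * V T)) * E T * GG (4 * T) (4 * T) = 2 * (E T * V T) * GG (4 * T) 0.
Proof.
  intros HT. pose proof (F3_ne0 T HT) as N3.
  assert (HV : V T = F1 T / F3 T) by (rewrite <- (VF T HT); field; auto).
  destruct (DII T HT) as [D1 D2]. pose proof (PIIid T HT) as P.
  rewrite D1, D2 in P.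
  assert (K : (F3 T * F3 T - (E T * E T) * (F1 T * F1 T)) * GG (4 * T) (4 * T) = 2 * (F1 T * F3 T) * GG (4 * T) 0).
  { rewrite <- P. ring. }
  rewrite HV.
  transitivity (E T / (F3 T * F3 T) * ((F3 T * F3 T - (E T * E T) * (F1 T * F1 T)) * GG (4 * T) (4 * T))).
  field. auto. rewrite K. field. auto.
Qed.

Lemma part_b_core T : (Re T < 0)%R ->
  let x := E T * V T in let y := E (2 * T) * V (2 * T) in
  x * x * y + x * x + y * y = y.
Proof.
  intros HT x y.
  assert (H2 : (Re (2 * T) < 0)%R) by reT.
  pose proof (theta_I T HT) as Ix. pose proof (theta_II T HT) as IIx.
  pose proof (theta_I (2 * T) H2) as Iy. pose proof (theta_II (2 * T) H2) as IIy.
  pose proof (Dprime T HT) as D.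
  fold x in Ix, IIx. fold y in Iy, IIy.
  replace (4 * (2 * T)) with (8 * T) in Iy, IIy by ring.
  replace (2 * (2 * T)) with (4 * T) in Iy by ring.
  assert (Hx : x <> 0). { unfold x. apply Cmult_neq_0. apply cexp_neq0. apply V_ne0; auto. }
  set (P := GG (4 * T) (4 * T)) in *. set (Gq := GG (2 * T) 0) in *. set (G2 := GG (4 * T) 0) in *.
  set (G4 := GG (8 * T) 0) in *. set (W := GG (8 * T) (8 * T)) in *. set (e1 := E (2 * T)) in *.
  assert (S1 : (1 - x * x) * Gq = (1 + x * x) * G2).
  { apply (Cmult_reg_l (2 * x)). intros H. apply Hx. replace x with (/ 2 * (2 * x)) by (field; intros H'; injection H'; lra).
    rewrite H. ring.
    transitivity ((1 - x * x) * (2 * x * Gq)). ring. rewrite <- Ix.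
    transitivity ((1 + x * x) * (2 * x * G2)). 2: ring. rewrite <- IIx. ring. }
  assert (HW : W <> 0) by (apply GG_bb_ne0; reT).
  assert (He1 : e1 <> 0) by apply cexp_neq0.
  apply (Cmult_reg_l (2 * e1 * W)).
  { apply Cmult_neq_0; auto. apply Cmult_neq_0; auto. intros H; injection H; lra. }
  assert (Hb : (1 + x * x) * ((1 + y * y) * e1 * W) - (1 - x * x) * ((1 - y * y) * e1 * W) - 2 * y * (1 - x * x) * e1 * W = 0).
  { rewrite Iy, IIy. transitivity (2 * y * ((1 + x * x) * G2 - (1 - x * x) * (G4 + e1 * W))). ring.
    rewrite <- D, <- S1. ring. }
  transitivity (2 * e1 * W * y + ((1 + x * x) * ((1 + y * y) * e1 * W) - (1 - x * x) * ((1 - y * y) * e1 * W) - 2 * y * (1 - x * x) * e1 * W)).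
  ring. rewrite Hb. ring.
Qed.

Close Scope C_scope.
Open Scope R_scope.
Local Open Scope C_scope.

Lemma even_2N N : Nat.even (2 * N) = true.
Proof. induction N. reflexivity. replace (2 * Datatypes.S N)%nat with (Datatypes.S (Datatypes.S (2 * N))) by lia.
  simpl. auto. Qed.
Lemma even_2N2 N : Nat.even (Datatypes.S (Datatypes.S (2 * N))) = true.
Proof. exact (even_2N N). Qed.
Lemma even_2N1 N : Nat.even (Datatypes.S (2 * N)) = false.
Proof. induction N. reflexivity. replace (2 * Datatypes.S N)%nat with (Datatypes.S (Datatypes.S (2 * N))) by lia.
  simpl. auto. Qed.

Lemma Cpow1 (w : C) : w ^ 1 = w * 1.
Proof. reflexivity. Qed.

Lemma pprod_ne0 (f : nat -> C) N : (forall n, (1 <= n <= N)%nat -> f n <> 0) -> pprod f N <> 0.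
Proof. induction N; intros H; simpl. intros Hz; injection Hz; lra.
  apply Cmult_neq_0. apply IHN; intros; apply H; lia. apply H; lia. Qed.

Lemma small_E A n : (Re A < 0)%R -> (1 <= n)%nat ->
  (Cmod (E (nC n * A)) = exp (Re A) ^ n)%R /\ (Cmod (E (nC n * A)) <= exp (Re A))%R.
Proof.
  intros HA Hn. rewrite Cmod_cexp, re_nC, exp_nat_mul. split; auto.
  rewrite <- exp_nat_mul. apply exp_le. assert (1 <= INR n)%R by (apply (le_INR 1); auto). nra.
Qed.

Lemma r_lt1 A : (Re A < 0)%R -> (0 <= exp (Re A) < 1)%R.
Proof. intros. split. left; apply exp_pos. rewrite <- exp_0. apply exp_increasing; auto. Qed.

Lemma onepE_ne0 A n : (Re A < 0)%R -> (1 <= n)%nat -> 1 + E (nC n * A) <> 0.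
Proof.
  intros HA Hn Hz. destruct (small_E A n HA Hn) as [_ H2]. pose proof (r_lt1 A HA).
  assert (E (nC n * A) = - (1)) by (replace (E (nC n * A)) with (1 + E (nC n * A) - 1) by ring; rewrite Hz; ring).
  rewrite H0, Cmod_opp, Cmod_1 in H2. lra.
Qed.

Lemma onemE_ne0 A n : (Re A < 0)%R -> (1 <= n)%nat -> 1 - E (nC n * A) <> 0.
Proof.
  intros HA Hn Hz. destruct (small_E A n HA Hn) as [_ H2]. pose proof (r_lt1 A HA).
  assert (E (nC n * A) = 1) by (replace (E (nC n * A)) with (1 - (1 - E (nC n * A))) by ring; rewrite Hz; ring).
  rewrite H0, Cmod_1 in H2. lra.
Qed.

Lemma inv_bound A n : (Re A < 0)%R -> (1 <= n)%nat -> forall s : C, Cmod s = 1%R ->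
  (Cmod (/ (1 + s * E (nC n * A)) - 1) <= / (1 - exp (Re A)) * exp (Re A) ^ n)%R.
Proof.
  intros HA Hn s Hs. destruct (small_E A n HA Hn) as [H1 H2]. pose proof (r_lt1 A HA).
  assert (Hm : Cmod (s * E (nC n * A)) = (exp (Re A) ^ n)%R) by (rewrite Cmod_mult, Hs, H1; ring).
  assert (Hm2 : (Cmod (s * E (nC n * A)) <= exp (Re A))%R) by (rewrite Cmod_mult, Hs; lra).
  pose proof (Cmod_rev 1 (- (s * E (nC n * A)))). rewrite Cmod_1, Cmod_opp in H0.
  replace (1 - - (s * E (nC n * A))) with (1 + s * E (nC n * A)) in H0 by ring.
  assert (Hnz : 1 + s * E (nC n * A) <> 0). { intros Hz. rewrite Hz, Cmod_0 in H0. lra. }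
  replace (/ (1 + s * E (nC n * A)) - 1) with (- (s * E (nC n * A)) / (1 + s * E (nC n * A))) by (field; auto).
  rewrite Cmod_div by auto. rewrite Cmod_opp, Hm.
  unfold Rdiv. rewrite Rmult_comm. apply Rmult_le_compat_r. apply pow_le; lra.
  apply Rinv_le_contravar; lra.
Qed.

Lemma u_link (tau' A : C) : (Re A < 0)%R -> (forall n, qpow (INR n) tau' = E (nC n * A)) ->
  prod_conv (u_factor tau') (Pu A).
Proof.
  intros HA Hq. apply cv_filterlim.
  pose proof (r_lt1 A HA) as Hr.
  destruct (prod_exists (u_factor tau') (/ (1 - exp (Re A))) (exp (Re A))) as [P HP].
  - left; apply Rinv_0_lt_compat; lra.
  - auto.
  - intros n Hn. unfold u_factor, czpow. rewrite Hq. destruct (Nat.even n); simpl.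
    + replace ((1 + E (nC n * A)) * 1 - 1) with (E (nC n * A)) by ring.
      destruct (small_E A n HA Hn) as [H1 _]. rewrite H1.
      rewrite <- (Rmult_1_l (exp (Re A) ^ n)) at 1. apply Rmult_le_compat_r. apply pow_le; lra.
      rewrite <- Rinv_1. apply Rinv_le_contravar; lra.
    + replace ((1 + E (nC n * A)) * 1) with (1 + 1 * E (nC n * A)) by ring.
      apply inv_bound; auto. apply Cmod_1.
  - assert (Hsub : forall N, pprod (u_factor tau') (2 * N) = ep 0 (2 * A) N / ep (- A) (2 * A) N).
    { induction N.
      - unfold ep; simpl. field; try (intros Hz; injection Hz; lra).
      - replace (2 * Datatypes.S N)%nat with (Datatypes.S (Datatypes.S (2 * N))) by lia.
        rewrite !pprod_S, IHN. unfold ep. rewrite !pprod_S.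
        unfold u_factor, czpow. rewrite even_2N1.
        rewrite even_2N2.
        rewrite !Hq, !Cpow1.
        replace (0 + nC (Datatypes.S N) * (2 * A)) with (nC (Datatypes.S (Datatypes.S (2 * N))) * A) by (nCsimpl; ring).
        replace (- A + nC (Datatypes.S N) * (2 * A)) with (nC (Datatypes.S (2 * N)) * A) by (nCsimpl; ring).
        assert (Hne : pprod (fun n => 1 + E (- A + nC n * (2 * A))) N <> 0).
        { apply pprod_ne0. intros n Hn. replace (- A + nC n * (2 * A)) with (nC (2 * n - 1) * A)
            by (rewrite nC_sub by lia; nCsimpl; ring). apply onepE_ne0; auto; lia. }
        pose proof (onepE_ne0 A (Datatypes.S (2 * N)) HA ltac:(lia)).
        field. auto. }
    assert (HPu : P = Pu A).
    { apply (cv_unique (fun N => pprod (u_factor tau') (2 * N))).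
      - apply (cv_sub_ge (pprod (u_factor tau'))). intros; lia. auto.
      - eapply cv_ext. intros n. symmetry. apply Hsub. unfold Pu. apply cv_div.
        apply eP_cv; rewrite re_2; lra. apply eP_cv; rewrite re_2; lra. apply eP_mA_ne0; auto. }
    rewrite <- HPu. auto.
Qed.

Lemma kron8_shift N r : kron8 (8 * N + r) = kron8 r.
Proof. unfold kron8. replace (8 * N + r)%nat with (r + N * 8)%nat by lia. rewrite Nat.Div0.mod_add. auto. Qed.

Lemma kron8_cases n : kron8 n = 0%Z \/ kron8 n = 1%Z \/ kron8 n = (-1)%Z.
Proof.
  unfold kron8. destruct (n mod 8) as [|[|[|[|[|[|[|[|m]]]]]]]]; auto.
Qed.

Lemma v_exists (tau' T : C) : (Re T < 0)%R -> (forall n, qpow (INR n) tau' = E (nC n * (2 * T))) ->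
  exists P, cv (pprod (v_factor tau')) P.
Proof.
  intros HT Hq.
  set (A := 2 * T). assert (HA : (Re A < 0)%R) by (unfold A; rewrite re_2; lra).
  pose proof (r_lt1 A HA) as Hr.
  apply (prod_exists (v_factor tau') (/ (1 - exp (Re A))) (exp (Re A))).
  - left; apply Rinv_0_lt_compat; lra.
  - auto.
  - intros n Hn. unfold v_factor, czpow. rewrite Hq. fold A.
    assert (HK : (1 <= / (1 - exp (Re A)))%R) by (rewrite <- Rinv_1; apply Rinv_le_contravar; lra).
    assert (Hp : (0 <= exp (Re A) ^ n)%R) by (apply pow_le; lra).
    destruct (kron8_cases n) as [H|[H|H]]; rewrite H.
    + replace (RtoC 1 - 1) with (RtoC 0) by ring. rewrite Cmod_0. nra.
    + simpl Pos.to_nat. rewrite Cpow1.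
      replace ((1 - E (nC n * A)) * 1 - 1) with (- E (nC n * A)) by ring.
      destruct (small_E A n HA Hn) as [H1 _]. rewrite Cmod_opp, H1. nra.
    + simpl Pos.to_nat. rewrite Cpow1.
      replace ((1 - E (nC n * A)) * 1) with (1 + (- (1)) * E (nC n * A)) by ring.
      apply inv_bound; auto. rewrite Cmod_opp. apply Cmod_1.
Qed.

Lemma czpow_1 w : czpow w 1%Z = w * 1.
Proof. reflexivity. Qed.
Lemma czpow_m1 w : czpow w (-1)%Z = / (w * 1).
Proof. reflexivity. Qed.
Lemma czpow_0 w : czpow w 0%Z = 1.
Proof. reflexivity. Qed.
Lemma k1 : kron8 1 = 1%Z. Proof. reflexivity. Qed.
Lemma k2 : kron8 2 = 0%Z. Proof. reflexivity. Qed.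
Lemma k3 : kron8 3 = (-1)%Z. Proof. reflexivity. Qed.
Lemma k4 : kron8 4 = 0%Z. Proof. reflexivity. Qed.
Lemma k5 : kron8 5 = (-1)%Z. Proof. reflexivity. Qed.
Lemma k6 : kron8 6 = 0%Z. Proof. reflexivity. Qed.
Lemma k7 : kron8 7 = 1%Z. Proof. reflexivity. Qed.
Lemma k8 : kron8 8 = 0%Z. Proof. reflexivity. Qed.

Lemma fac_id (T : C) (j n : nat) : (j <= 8 * n)%nat ->
  E (iota - 2 * nC j * T + nC n * (16 * T)) = - E (nC (8 * n - j) * (2 * T)).
Proof.
  intros H. rewrite <- cexp_plus_iota. f_equal. rewrite nC_sub by auto. nCsimpl. ring.
Qed.

Lemma v_link (tau' T : C) : (Re T < 0)%R -> (forall n, qpow (INR n) tau' = E (nC n * (2 * T))) ->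
  prod_conv (v_factor tau') (V T).
Proof.
  intros HT Hq. apply cv_filterlim.
  destruct (v_exists tau' T HT Hq) as [P HP].
  assert (HA : (Re (2 * T) < 0)%R) by (rewrite re_2; lra).
  assert (Hd : (Re (16 * T) < 0)%R) by (apply re_lin_ok; auto; lra).
  assert (Hne : forall k j, (j <= 7)%nat -> ep (iota - 2 * nC j * T) (16 * T) k <> 0).
  { intros k j Hj. apply pprod_ne0. intros n Hn. rewrite fac_id by lia.
    replace (1 + - E (nC (8 * n - j) * (2 * T))) with (1 - E (nC (8 * n - j) * (2 * T))) by ring.
    apply onemE_ne0; auto. lia. }
  assert (C14 : iota - 14 * T = iota - 2 * nC 7 * T) by (unfold nC; rewrite INR_IZR_INZ; change (Z.of_nat 7) with 7%Z; ring).
  assert (C10 : iota - 10 * T = iota - 2 * nC 5 * T) by (unfold nC; rewrite INR_IZR_INZ; change (Z.of_nat 5) with 5%Z; ring).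
  assert (C6 : iota - 6 * T = iota - 2 * nC 3 * T) by (unfold nC; rewrite INR_IZR_INZ; change (Z.of_nat 3) with 3%Z; ring).
  assert (C2 : iota - 2 * T = iota - 2 * nC 1 * T) by (unfold nC; rewrite INR_IZR_INZ; change (Z.of_nat 1) with 1%Z; ring).
  assert (Hsub : forall N, pprod (v_factor tau') (8 * N) =
     ep (iota - 14 * T) (16 * T) N * ep (iota - 2 * T) (16 * T) N /
     (ep (iota - 10 * T) (16 * T) N * ep (iota - 6 * T) (16 * T) N)).
  { rewrite C14, C10, C6, C2. induction N.
    - unfold ep; simpl. field; try (intros Hz; injection Hz; lra).
    - replace (8 * Datatypes.S N)%nat with (8 * N + 8)%nat by lia.
      rewrite pprod_add, IHN. rewrite !pprod_S, pprod_0. cbv beta.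
      unfold v_factor. rewrite !kron8_shift, k1, k2, k3, k4, k5, k6, k7, k8.
      rewrite !czpow_1, !czpow_m1, !czpow_0, !Hq.
      pose proof (Hne N 5%nat ltac:(lia)). pose proof (Hne N 3%nat ltac:(lia)).
      unfold ep in *. rewrite !pprod_S.
      rewrite !fac_id by lia.
      replace (8 * Datatypes.S N - 7)%nat with (8 * N + 1)%nat by lia.
      replace (8 * Datatypes.S N - 1)%nat with (8 * N + 7)%nat by lia.
      replace (8 * Datatypes.S N - 5)%nat with (8 * N + 3)%nat by lia.
      replace (8 * Datatypes.S N - 3)%nat with (8 * N + 5)%nat by lia.
      pose proof (onemE_ne0 (2 * T) (8 * N + 3) HA ltac:(lia)).
      pose proof (onemE_ne0 (2 * T) (8 * N + 5) HA ltac:(lia)).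
      field. repeat split; auto. }
  assert (HV : P = V T).
  { apply (cv_unique (fun N => pprod (v_factor tau') (8 * N))).
    - apply (cv_sub_ge (pprod (v_factor tau'))). intros; lia. auto.
    - eapply cv_ext. intros n. symmetry. apply Hsub. unfold V. apply cv_div.
      apply cv_mult; apply eP_cv; auto. apply cv_mult; apply eP_cv; auto.
      apply Cmult_neq_0; apply ne0_gen; auto; reT. }
  rewrite <- HV. auto.
Qed.

Close Scope C_scope.
Open Scope R_scope.

Lemma Ceq_parts (x y : C) : Re x = Re y -> Im x = Im y -> x = y.
Proof. intros. apply injective_projections; auto. Qed.

Section Final.
Variable tau : C.
Hypothesis Htau : 0 < Im tau.
Let U : C := (RtoC PI * Ci * tau)%C.

Lemma U_neg : Re U < 0.
Proof. unfold U. destruct tau as [a b]. simpl in *. unfold Re, Cmult, Ci, RtoC; simpl.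
  pose proof PI_RGT_0. nra. Qed.

Lemma qpow_eq r t (z : C) : (RtoC (2 * PI * r) * Ci * t = z)%C -> qpow r t = E z.
Proof. intros H. unfold qpow. rewrite H. auto. Qed.

Lemma qn1 n : qpow (INR n) tau = E (nC n * (2 * U))%C.
Proof. apply qpow_eq. unfold U, nC. rewrite !RtoC_mult. ring. Qed.
Lemma qn2 n : qpow (INR n) (RtoC 2 * tau)%C = E (nC n * (4 * U))%C.
Proof. apply qpow_eq. unfold U, nC. rewrite !RtoC_mult. ring. Qed.
Lemma qn2' n : qpow (INR n) (RtoC 2 * tau)%C = E (nC n * (2 * (2 * U)))%C.
Proof. apply qpow_eq. unfold U, nC. rewrite !RtoC_mult. ring. Qed.

Lemma q18a : (qpow (1/8) tau ^ 4 = E U)%C.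
Proof. unfold qpow. rewrite <- cexp_nat. f_equal. unfold U, nC. destruct tau as [a b].
  apply Ceq_parts; unfold Re, Im; simpl; field. Qed.
Lemma q18b : (qpow (1/8) (RtoC 2 * tau) ^ 2 = E U)%C.
Proof. unfold qpow. rewrite <- cexp_nat. f_equal. unfold U, nC. destruct tau as [a b].
  apply Ceq_parts; unfold Re, Im; simpl; field. Qed.
Lemma q18c : (qpow (1/8) (RtoC 2 * tau) ^ 4 = E (2 * U))%C.
Proof. unfold qpow. rewrite <- cexp_nat. f_equal. unfold U, nC. destruct tau as [a b].
  apply Ceq_parts; unfold Re, Im; simpl; field. Qed.
Lemma q12a : qpow (1/2) tau = E U.
Proof. unfold qpow. f_equal. unfold U. destruct tau as [a b].
  apply Ceq_parts; unfold Re, Im; simpl; field. Qed.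
Lemma q12b : qpow (1/2) (RtoC 2 * tau)%C = E (2 * U)%C.
Proof. unfold qpow. f_equal. unfold U. destruct tau as [a b].
  apply Ceq_parts; unfold Re, Im; simpl; field. Qed.

Lemma final_a : exists Pu1 Pu2 : C,
     prod_conv (u_factor tau) Pu1 /\
     prod_conv (u_factor (Cmult (RtoC 2) tau)) Pu2 /\
     let x := Cmult (Cmult (RtoC (sqrt 2)) (qpow (1/8) tau)) Pu1 in
     let y := Cmult (Cmult (RtoC (sqrt 2)) (qpow (1/8) (Cmult (RtoC 2) tau))) Pu2 in
     Cmult (Cpow x 4) (Cplus (Cpow y 4) (RtoC 1)) = Cmult (RtoC 2) (Cpow y 2).
Proof.
  pose proof U_neg as HU.
  assert (H2 : Re (2 * U)%C < 0) by (rewrite re_2; lra).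
  assert (H4 : Re (4 * U)%C < 0) by (apply re_lin_ok; auto; lra).
  exists (Pu (2 * U)%C), (Pu (4 * U)%C). split; [|split].
  - apply u_link; auto. apply qn1.
  - apply u_link; auto. apply qn2.
  - intros x y. unfold x, y.
    pose proof (part_a_core U HU) as K.
    pose proof q18a as Q1. pose proof q18b as Q2. pose proof q18c as Q3.
    assert (Hs : (RtoC (sqrt 2) * RtoC (sqrt 2) = 2)%C).
    { rewrite <- RtoC_mult, sqrt_sqrt by lra. auto. }
    set (s := RtoC (sqrt 2)) in *. set (q1 := qpow (1/8) tau) in *.
    set (q2 := qpow (1 / 8) (RtoC 2 * tau)%C) in *.
    set (P1 := Pu (2 * U)%C) in *. set (P2 := Pu (4 * U)%C) in *.
    transitivity ((s * s) * (s * s) * q1 ^ 4 * (P1 * P1 * (P1 * P1)) *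
                  ((s * s) * (s * s) * q2 ^ 4 * (P2 * P2) * (P2 * P2) + 1))%C.
    { simpl. ring. }
    rewrite Hs, Q1, Q3.
    transitivity (4 * E U * (P1 * P1 * (P1 * P1) * (1 + 4 * E (2 * U) * (P2 * P2) * (P2 * P2))))%C.
    { ring. }
    rewrite K. rewrite <- Q2.
    transitivity (2 * ((s * s) * q2 ^ 2 * (P2 * P2)))%C.
    { rewrite Hs. ring. }
    simpl. ring.
Qed.

Lemma final_b : exists Pv1 Pv2 : C,
     prod_conv (v_factor tau) Pv1 /\
     prod_conv (v_factor (Cmult (RtoC 2) tau)) Pv2 /\
     let x := Cmult (qpow (1/2) tau) Pv1 in
     let y := Cmult (qpow (1/2) (Cmult (RtoC 2) tau)) Pv2 in
     Cplus (Cplus (Cmult (Cpow x 2) y) (Cpow x 2)) (Cpow y 2) = y.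
Proof.
  pose proof U_neg as HU.
  assert (H2 : Re (2 * U)%C < 0) by (rewrite re_2; lra).
  exists (V U), (V (2 * U)%C). split; [|split].
  - apply v_link; auto. apply qn1.
  - apply v_link; auto. apply qn2'.
  - intros x y. unfold x, y. rewrite q12a, q12b.
    pose proof (part_b_core U HU) as K. simpl in K.
    simpl. rewrite <- K at 4. ring.
Qed.

End Final.


Theorem proposition1 (tau : C) (Htau : 0 < Im tau) :
  (exists Pu1 Pu2 : C,
     prod_conv (u_factor tau) Pu1 /\
     prod_conv (u_factor (Cmult (RtoC 2) tau)) Pu2 /\
     let x := Cmult (Cmult (RtoC (sqrt 2)) (qpow (1/8) tau)) Pu1 in
     let y := Cmult (Cmult (RtoC (sqrt 2)) (qpow (1/8) (Cmult (RtoC 2) tau))) Pu2 in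
     Cmult (Cpow x 4) (Cplus (Cpow y 4) (RtoC 1)) = Cmult (RtoC 2) (Cpow y 2))
  /\
  (exists Pv1 Pv2 : C,
     prod_conv (v_factor tau) Pv1 /\
     prod_conv (v_factor (Cmult (RtoC 2) tau)) Pv2 /\
     let x := Cmult (qpow (1/2) tau) Pv1 in
     let y := Cmult (qpow (1/2) (Cmult (RtoC 2) tau)) Pv2 in
     Cplus (Cplus (Cmult (Cpow x 2) y) (Cpow x 2)) (Cpow y 2) = y).
Proof.
  split.
  - apply final_a; auto.
  - apply final_b; auto.
Qed.
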